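(* Let $\mu,\phi$ satisfy $\phi''(x) = 1 - \int_{\mathbb{R}} \mu(\tfrac12 v^2 + \phi(x))\,dv$ and assumptions (i)–(iv) below, and let $q(x) = \int_{\mathbb{R}} \mu'(\tfrac12 v^2 + \phi(x))\,dv$. Then $u=\phi'$ is an eigenfunction with eigenvalue $0$ of the Dirichlet Sturm–Liouville problem $u''+(q+\lambda)u=0$, $u(0)=u(P_\phi)=0$, and it is the second eigenfunction. Consequently the smallest eigenvalue $\lambda_0$ of this problem satisfies $\lambda_0<0$, and its first eigenfunction $u_0$ satisfies $u_0(x) = u_0(P_\phi - x)$ and $u_0'(P_\phi-x) = -u_0'(x)$ for all $x\in[0,P_\phi]$; in particular $\psi = u_0u_0'$ satisfies $\psi(P_\phi - x) = -\psi(x)$.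
   Context: Assumptions: (i) $\mu\in C^1(\mathbb{R})$ is nonnegative; (ii) $\int_{\mathbb{R}} \mu(\tfrac12 v^2)\,dv = 1$; (iii) there are $\gamma>1$, $C>0$ with $|\mu'(y)| \le C/(1+|y|^\gamma)$ for all $y$; (iv) $\phi$ is nonconstant with minimal period $P_\phi$, and, writing $\phi_+ = \max\phi$, $\phi_- = \min\phi$, it is normalized so that $\phi(0)=\phi(P_\phi)=\phi_+$, $\phi(P_\phi/2) = \phi_-$, $\phi(x) = \phi(P_\phi - x)$ for all $x\in[0,P_\phi]$, and $\phi$ is strictly decreasing on $[0,P_\phi/2]$ (and strictly increasing on $[P_\phi/2,P_\phi]$ by symmetry). *)

(* Defs.v *)
From Stdlib Require Import Reals Lra.
Open Scope R_scope.

Definition improper_integral (f : R -> R) (l : R) : Prop :=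
  forall eps : R, eps > 0 ->
    exists M : R, forall a b : R, a <= - M -> M <= b ->
      exists pr : Riemann_integrable f a b, Rabs (RiemannInt pr - l) < eps.

(* |y|^g for real g > 0, with the convention 0^g = 0
   (Stdlib's Rpower is only meaningful for positive bases). *)
Definition abs_rpow (y g : R) : R :=
  if Req_EM_T y 0 then 0 else Rpower (Rabs y) g.

Definition SL_eigenpair (q : R -> R) (P lam : R) (u du : R -> R) : Prop :=
  (exists ddu : R -> R, forall x : R, 0 <= x <= P ->
      derivable_pt_lim u x (du x) /\ derivable_pt_lim du x (ddu x) /\
      ddu x + (q x + lam) * u x = 0) /\
  u 0 = 0 /\ u P = 0 /\
  (exists x : R, 0 <= x <= P /\ u x <> 0).

Definition SL_eigenvalue (q : R -> R) (P lam : R) : Prop :=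
  exists u du : R -> R, SL_eigenpair q P lam u du.

(* Main.v *)
Require Import Defs.
From Stdlib Require Import Reals Lra Lia Classical.
From Coquelicot Require Import Coquelicot.
Open Scope R_scope.

Lemma dlim_cont f x l : derivable_pt_lim f x l -> continuity_pt f x.
Proof. intro H. apply derivable_continuous_pt. exists l. exact H. Qed.

Lemma dq_bound f x l eps : derivable_pt_lim f x l -> eps > 0 ->
  exists d, d > 0 /\ forall h, h <> 0 -> Rabs h < d -> Rabs ((f (x+h) - f x)/h - l) < eps.
Proof. intros H He. destruct (H eps He) as [d Hd]. exists d. split. apply cond_pos. exact Hd. Qed.

Lemma deriv_nonneg_right f x l : derivable_pt_lim f x l ->
  (exists d, d > 0 /\ forall h, 0 < h < d -> f x <= f (x+h)) -> 0 <= l.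
Proof.
  intros H [d [Hd Hf]]. destruct (Rle_or_lt 0 l) as [|Hl]; auto.
  destruct (dq_bound f x l (-l) H) as [d1 [Hd1 Hq]]; [lra|].
  set (h := Rmin d d1 / 2).
  assert (Hh : 0 < h < d /\ h < d1) by (unfold h; unfold Rmin; destruct (Rle_dec d d1); lra).
  specialize (Hq h). specialize (Hf h).
  assert (0 <= (f (x+h) - f x)/h).
  { apply Rle_mult_inv_pos; [|lra]. specialize (Hf (proj1 Hh)). lra. }
  assert (Rabs h < d1) by (rewrite Rabs_right; lra).
  specialize (Hq ltac:(lra) H1).
  apply Rabs_def2 in Hq. lra.
Qed.

Lemma deriv_nonpos_right f x l : derivable_pt_lim f x l ->
  (exists d, d > 0 /\ forall h, 0 < h < d -> f (x+h) <= f x) -> l <= 0.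
Proof.
  intros H [d [Hd Hf]].
  assert (0 <= -l).
  { apply (deriv_nonneg_right (fun y => - f y) x). apply derivable_pt_lim_opp. exact H.
    exists d. split; auto. intros h Hh. specialize (Hf h Hh). lra. }
  lra.
Qed.

Lemma deriv_nonneg_left f x l : derivable_pt_lim f x l ->
  (exists d, d > 0 /\ forall h, 0 < h < d -> f (x-h) <= f x) -> 0 <= l.
Proof.
  intros H [d [Hd Hf]].
  assert (H2 : derivable_pt_lim (fun y => f (- y)) (-x) (l * -1)).
  { apply (derivable_pt_lim_comp (fun y => - y) f). 
    replace (-1) with (- (1)) by ring. apply derivable_pt_lim_opp. apply derivable_pt_lim_id.
    replace (- - x) with x by ring. exact H. }
  assert (l * -1 <= 0).
  { apply (deriv_nonpos_right _ _ _ H2). exists d. split; auto. intros h Hh.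
    replace (- (-x + h)) with (x - h) by ring. replace (- - x) with x by ring. apply Hf; auto. }
  lra.
Qed.

Lemma deriv_nonpos_left f x l : derivable_pt_lim f x l ->
  (exists d, d > 0 /\ forall h, 0 < h < d -> f x <= f (x-h)) -> l <= 0.
Proof.
  intros H [d [Hd Hf]].
  assert (0 <= -l).
  { apply (deriv_nonneg_left (fun y => - f y) x). apply derivable_pt_lim_opp. exact H.
    exists d. split; auto. intros h Hh. specialize (Hf h Hh). lra. }
  lra.
Qed.

Lemma deriv_pos_right f x l : derivable_pt_lim f x l -> 0 < l ->
  exists d, d > 0 /\ forall h, 0 < h < d -> f x < f (x+h).
Proof.
  intros H Hl. destruct (dq_bound f x l l H Hl) as [d [Hd Hq]].
  exists d. split; auto. intros h Hh. specialize (Hq h ltac:(lra) ltac:(rewrite Rabs_right; lra)).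
  apply Rabs_def2 in Hq.
  assert (0 < (f (x+h) - f x)/h) by lra.
  assert (0 < (f (x + h) - f x)).
  { replace (f (x+h) - f x) with ((f (x+h) - f x)/h * h) by (field; lra). apply Rmult_lt_0_compat; lra. }
  lra.
Qed.

Lemma deriv_pos_left f x l : derivable_pt_lim f x l -> 0 < l ->
  exists d, d > 0 /\ forall h, 0 < h < d -> f (x-h) < f x.
Proof.
  intros H Hl. destruct (dq_bound f x l l H Hl) as [d [Hd Hq]].
  exists d. split; auto. intros h Hh. specialize (Hq (-h) ltac:(lra) ltac:(rewrite Rabs_left; lra)).
  apply Rabs_def2 in Hq.
  assert (0 < (f (x+-h) - f x)/(-h)) by lra.
  assert (0 < (f x - f (x + - h))).
  { replace (f x - f (x+-h)) with ((f (x+-h) - f x)/(-h) * h) by (field; lra). apply Rmult_lt_0_compat; lra. }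
  replace (x - h) with (x + - h) by ring. lra.
Qed.

Lemma deriv_neg_right f x l : derivable_pt_lim f x l -> l < 0 ->
  exists d, d > 0 /\ forall h, 0 < h < d -> f (x+h) < f x.
Proof.
  intros H Hl. destruct (deriv_pos_right (fun y => - f y) x (-l)) as [d [Hd Hf]].
  apply derivable_pt_lim_opp; auto. lra. exists d. split; auto. intros h Hh. specialize (Hf h Hh). lra.
Qed.

Lemma deriv_neg_left f x l : derivable_pt_lim f x l -> l < 0 ->
  exists d, d > 0 /\ forall h, 0 < h < d -> f x < f (x-h).
Proof.
  intros H Hl. destruct (deriv_pos_left (fun y => - f y) x (-l)) as [d [Hd Hf]].
  apply derivable_pt_lim_opp; auto. lra. exists d. split; auto. intros h Hh. specialize (Hf h Hh). lra.
Qed.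

Lemma deriv_zero_max f x l a b : derivable_pt_lim f x l -> a < x < b ->
  (forall y, a < y < b -> f y <= f x) -> l = 0.
Proof.
  intros H Hx Hm.
  assert (0 <= l).
  { apply (deriv_nonneg_left f x l H). exists (x - a). split; [lra|]. intros h Hh. apply Hm; lra. }
  assert (l <= 0).
  { apply (deriv_nonpos_right f x l H). exists (b - x). split; [lra|]. intros h Hh. apply Hm; lra. }
  lra.
Qed.

Lemma deriv_zero_min f x l a b : derivable_pt_lim f x l -> a < x < b ->
  (forall y, a < y < b -> f x <= f y) -> l = 0.
Proof.
  intros H Hx Hm.
  assert (-l = 0).
  { apply (deriv_zero_max (fun y => - f y) x (-l) a b); auto. apply derivable_pt_lim_opp; auto.
    intros y Hy. specialize (Hm y Hy). lra. }
  lra.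
Qed.

Lemma nondecr_deriv f f' a b : (forall x, a <= x <= b -> derivable_pt_lim f x (f' x)) ->
  (forall x, a <= x <= b -> 0 <= f' x) -> forall x y, a <= x -> x <= y -> y <= b -> f x <= f y.
Proof.
  intros Hd Hp x y Hx Hxy Hy. destruct (Req_dec x y) as [->|Hne]; [lra|].
  assert (Hd' : forall c, x <= c <= y -> derivable_pt_lim f c (f' c)) by (intros c Hc; apply Hd; lra).
  destruct (MVT_cor2 f f' x y ltac:(lra) Hd') as [c [Hc1 Hc2]].
  assert (0 <= f' c * (y - x)) by (apply Rmult_le_pos; [apply Hp; lra | lra]). lra.
Qed.

Lemma nonincr_deriv f f' a b : (forall x, a <= x <= b -> derivable_pt_lim f x (f' x)) ->
  (forall x, a <= x <= b -> f' x <= 0) -> forall x y, a <= x -> x <= y -> y <= b -> f y <= f x.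
Proof.
  intros Hd Hp x y Hx Hxy Hy.
  assert (- f x <= - f y).
  { apply (nondecr_deriv (fun z => - f z) (fun z => - f' z) a b); auto.
    intros z Hz. apply derivable_pt_lim_opp. auto. intros z Hz. specialize (Hp z Hz). lra. }
  lra.
Qed.

Lemma ivt2 f x y : x <= y -> (forall c, x <= c <= y -> continuity_pt f c) -> f x * f y < 0 ->
  exists z, x < z < y /\ f z = 0.
Proof.
  intros Hxy Hc Hs.
  assert (Hx0 : f x <> 0) by (intro E; rewrite E in Hs; lra).
  assert (Hy0 : f y <> 0) by (intro E; rewrite E in Hs; lra).
  assert (Hne : x <> y) by (intro E; subst; nra).
  assert (Hfin : forall z, x <= z <= y -> f z = 0 -> exists z, x < z < y /\ f z = 0).
  { intros z Hz Ez. exists z. split; auto. split.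
    - destruct (Req_dec x z) as [E|E]; [subst; contradiction | lra].
    - destruct (Req_dec z y) as [E|E]; [subst; contradiction | lra]. }
  destruct (Rlt_or_le (f x) 0) as [Hx|Hx].
  - assert (0 < f y) by nra.
    destruct (Ranalysis5.IVT_interv f x y Hc ltac:(lra) Hx H) as [z [Hz1 Hz2]].
    apply (Hfin z); auto.
  - assert (f y < 0) by nra.
    destruct (Ranalysis5.IVT_interv (fun t => - f t) x y) as [z [Hz1 Hz2]]; try lra.
    intros c Hc'. apply continuity_pt_opp. auto.
    apply (Hfin z); auto. lra.
Qed.

Lemma const_sign f a b : a < b -> (forall x, a <= x <= b -> continuity_pt f x) ->
  (forall x, a < x < b -> f x <> 0) ->
  (forall x, a < x < b -> 0 < f x) \/ (forall x, a < x < b -> f x < 0).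
Proof.
  intros Hab Hc Hnz. set (m := (a+b)/2).
  assert (Hm : a < m < b) by (unfold m; lra).
  assert (Hgen : forall x, a < x < b -> f x * f m < 0 -> False).
  { intros x Hx Hs. destruct (Rle_or_lt x m) as [Hxm|Hxm].
    - destruct (ivt2 f x m Hxm) as [z [Hz1 Hz2]]; auto. intros c Hc'; apply Hc; lra.
      apply (Hnz z); auto; lra.
    - destruct (ivt2 f m x) as [z [Hz1 Hz2]]; auto. lra. intros c Hc'; apply Hc; lra.
      rewrite Rmult_comm; auto. apply (Hnz z); auto; lra. }
  destruct (Rlt_or_le 0 (f m)) as [Hpos|Hneg].
  - left. intros x Hx. destruct (Rlt_or_le 0 (f x)) as [|H]; auto. exfalso.
    destruct (Rle_lt_or_eq_dec _ _ H) as [H1|H1]; [|apply (Hnz x Hx); auto].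
    apply (Hgen x Hx). nra.
  - right. intros x Hx. destruct (Rlt_or_le (f x) 0) as [|H]; auto. exfalso.
    assert (Hm0 : f m < 0) by (destruct (Rle_lt_or_eq_dec _ _ Hneg); auto; exfalso; apply (Hnz m); auto).
    destruct (Rle_lt_or_eq_dec _ _ H) as [H1|H1]; [|apply (Hnz x Hx); auto].
    apply (Hgen x Hx). nra.
Qed.

Lemma Rabs_le_between a b : Rabs a <= b -> - b <= a <= b.
Proof. unfold Rabs; destruct (Rcase_abs a); intros; lra. Qed.
Lemma Rabs_lt_between a b : Rabs a < b -> - b < a < b.
Proof. unfold Rabs; destruct (Rcase_abs a); intros; lra. Qed.
Lemma prod_bound w z t k : Rabs t <= k -> 2 * w * z * t <= k * (w * w + z * z).
Proof.
  intros H. apply Rabs_le_between in H.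
  assert (Hk : 0 <= k) by lra.
  assert (A1 : 0 <= k * ((w - z) * (w - z))) by (apply Rmult_le_pos; [exact Hk | apply Rle_0_sqr]).
  assert (A2 : 0 <= k * ((w + z) * (w + z))) by (apply Rmult_le_pos; [exact Hk | apply Rle_0_sqr]).
  destruct (Rle_or_lt 0 (w * z)).
  - assert (0 <= (k - t) * (w * z)) by (apply Rmult_le_pos; lra). nra.
  - assert (0 <= (k + t) * (- (w * z))) by (apply Rmult_le_pos; lra). nra.
Qed.

Lemma dlim_eq f x l l' : derivable_pt_lim f x l -> l = l' -> derivable_pt_lim f x l'.
Proof. intros H ->; exact H. Qed.
Lemma dmul f g x lf lg : derivable_pt_lim f x lf -> derivable_pt_lim g x lg ->
  derivable_pt_lim (fun y => f y * g y) x (lf * g x + f x * lg).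
Proof. intros. exact (derivable_pt_lim_mult f g x lf lg H H0). Qed.
Lemma dplus f g x lf lg : derivable_pt_lim f x lf -> derivable_pt_lim g x lg ->
  derivable_pt_lim (fun y => f y + g y) x (lf + lg).
Proof. intros. exact (derivable_pt_lim_plus f g x lf lg H H0). Qed.
Lemma dminus f g x lf lg : derivable_pt_lim f x lf -> derivable_pt_lim g x lg ->
  derivable_pt_lim (fun y => f y - g y) x (lf - lg).
Proof. intros. exact (derivable_pt_lim_minus f g x lf lg H H0). Qed.
Lemma dscal c f x lf : derivable_pt_lim f x lf -> derivable_pt_lim (fun y => c * f y) x (c * lf).
Proof. intros. exact (derivable_pt_lim_scal f c x lf H). Qed.
Lemma dconst c x : derivable_pt_lim (fun _ => c) x 0.
Proof. apply derivable_pt_lim_const. Qed.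
Lemma dexplin k x0 x : derivable_pt_lim (fun y => exp (k * (y - x0))) x (k * exp (k * (x - x0))).
Proof.
  assert (H : derivable_pt_lim (fun y => k * (y - x0)) x k).
  { eapply dlim_eq. apply dscal. apply dminus. apply derivable_pt_lim_id. apply dconst. cbv beta; ring. }
  pose proof (derivable_pt_lim_comp (fun y => k * (y - x0)) exp x k (exp (k * (x - x0))) H (derivable_pt_lim_exp _)).
  replace (k * exp (k * (x - x0))) with (exp (k * (x - x0)) * k) by ring. exact H0.
Qed.

Definition sol (Q : R -> R) (a b : R) (u du : R -> R) : Prop :=
  forall x, a <= x <= b -> derivable_pt_lim u x (du x) /\ derivable_pt_lim du x (- (Q x * u x)).

Lemma bound_on Q a b : a <= b -> (forall x, a <= x <= b -> continuity_pt Q x) ->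
  exists K, 0 <= K /\ forall x, a <= x <= b -> Rabs (Q x) <= K.
Proof.
  intros Hab Hc. destruct (continuity_ab_maj (fun x => Rabs (Q x)) a b Hab) as [xm [Hm _]].
  intros c Hc'. apply (continuity_pt_comp Q Rabs). auto. apply Rcontinuity_abs.
  exists (Rabs (Q xm)). split. apply Rabs_pos. exact Hm.
Qed.

Lemma sol_cont_u Q a b u du : sol Q a b u du -> forall x, a <= x <= b -> continuity_pt u x.
Proof. intros H x Hx. apply (dlim_cont u x (du x)). apply H; auto. Qed.
Lemma sol_cont_du Q a b u du : sol Q a b u du -> forall x, a <= x <= b -> continuity_pt du x.
Proof. intros H x Hx. apply (dlim_cont du x (- (Q x * u x))). apply H; auto. Qed.

Lemma sol_unique Q a b u du x0 : (forall x, a <= x <= b -> continuity_pt Q x) ->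
  sol Q a b u du -> a <= x0 <= b -> u x0 = 0 -> du x0 = 0 ->
  forall x, a <= x <= b -> u x = 0 /\ du x = 0.
Proof.
  intros HQ Hs Hx0 Hu0 Hdu0.
  destruct (bound_on Q a b ltac:(lra) HQ) as [K0 [HK0 HK]].
  set (K := K0 + 2).
  set (E := fun y => u y * u y + du y * du y).
  set (E' := fun y => 2 * u y * du y * (1 - Q y)).
  assert (HE : forall y, a <= y <= b -> derivable_pt_lim E y (E' y)).
  { intros y Hy. destruct (Hs y Hy) as [H1 H2]. unfold E, E'.
    eapply dlim_eq. apply dplus; apply dmul; eauto. cbv beta; ring. }
  assert (HEb : forall y, a <= y <= b -> Rabs (E' y) <= K * E y).
  { intros y Hy. unfold E, E'. specialize (HK y Hy).
    assert (Rabs (1 - Q y) <= K) by (unfold Rminus; eapply Rle_trans; [apply Rabs_triang|];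
      rewrite Rabs_R1, Rabs_Ropp; unfold K; lra).
    rewrite Rabs_mult. 
    assert (Rabs (2 * u y * du y) <= u y * u y + du y * du y).
    { rewrite !Rabs_mult. rewrite (Rabs_right 2) by lra.
      assert (0 <= (Rabs (u y) - Rabs (du y))^2) by apply pow2_ge_0.
      assert (Rabs (u y) * Rabs (u y) = u y * u y) by (rewrite <- Rabs_mult; apply Rabs_right; nra).
      assert (Rabs (du y) * Rabs (du y) = du y * du y) by (rewrite <- Rabs_mult; apply Rabs_right; nra).
      nra. }
    assert (0 <= Rabs (1 - Q y)) by apply Rabs_pos.
    assert (0 <= Rabs (2 * u y * du y)) by apply Rabs_pos.
    nra. }
  assert (HE0 : E x0 = 0) by (unfold E; rewrite Hu0, Hdu0; ring).
  assert (Hfin : forall x, E x <= 0 -> u x = 0 /\ du x = 0).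
  { intros x Hx. unfold E in Hx. split; nra. }
  intros x Hx. apply Hfin.
  destruct (Rle_or_lt x0 x) as [Hle|Hlt].
  -
    set (F := fun y => E y * exp (- K * (y - x0))).
    assert (HF : forall y, x0 <= y <= b -> derivable_pt_lim F y ((E' y - K * E y) * exp (- K * (y - x0)))).
    { intros y Hy. unfold F. eapply dlim_eq. apply dmul. apply HE; lra. apply dexplin. cbv beta; ring. }
    assert (HFn : forall y, x0 <= y <= b -> (E' y - K * E y) * exp (- K * (y - x0)) <= 0).
    { intros y Hy. assert (0 < exp (- K * (y - x0))) by apply exp_pos.
      specialize (HEb y ltac:(lra)). apply Rabs_le_between in HEb. nra. }
    pose proof (nonincr_deriv F _ x0 b HF HFn x0 x ltac:(lra) Hle ltac:(lra)).
    unfold F in H. rewrite HE0 in H. assert (0 < exp (- K * (x - x0))) by apply exp_pos. nra.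
  - set (F := fun y => E y * exp (K * (y - x0))).
    assert (HF : forall y, a <= y <= x0 -> derivable_pt_lim F y ((E' y + K * E y) * exp (K * (y - x0)))).
    { intros y Hy. unfold F. eapply dlim_eq. apply dmul. apply HE; lra. apply dexplin. cbv beta; ring. }
    assert (HFn : forall y, a <= y <= x0 -> 0 <= (E' y + K * E y) * exp (K * (y - x0))).
    { intros y Hy. assert (0 < exp (K * (y - x0))) by apply exp_pos.
      specialize (HEb y ltac:(lra)). apply Rabs_le_between in HEb. nra. }
    pose proof (nondecr_deriv F _ a x0 HF HFn x x0 ltac:(lra) ltac:(lra) ltac:(lra)).
    unfold F in H. rewrite HE0 in H. assert (0 < exp (K * (x - x0))) by apply exp_pos. nra.
Qed.

Lemma sol_close Q1 Q2 a b u1 du1 u2 du2 K0 B d :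
  a <= b -> sol Q1 a b u1 du1 -> sol Q2 a b u2 du2 -> u1 a = u2 a -> du1 a = du2 a ->
  0 <= K0 -> (forall x, a <= x <= b -> Rabs (Q1 x) <= K0) ->
  (forall x, a <= x <= b -> Rabs (u2 x) <= B) ->
  0 <= d -> d <= 1 -> (forall x, a <= x <= b -> Rabs (Q1 x - Q2 x) <= d) ->
  forall x, a <= x <= b ->
    (u1 x - u2 x) * (u1 x - u2 x) + (du1 x - du2 x) * (du1 x - du2 x) <= d * (B * B) * exp ((K0 + 3) * (b - a)).
Proof.
  intros Hab H1 H2 Ha Hda HK0 HK HB Hd0 Hd1 Hd x Hx.
  set (K := K0 + 3).
  set (E := fun y => (u1 y - u2 y) * (u1 y - u2 y) + (du1 y - du2 y) * (du1 y - du2 y)).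
  set (E' := fun y => 2 * (u1 y - u2 y) * (du1 y - du2 y) + 2 * (du1 y - du2 y) * (- (Q1 y * u1 y) + Q2 y * u2 y)).
  assert (HE : forall y, a <= y <= b -> derivable_pt_lim E y (E' y)).
  { intros y Hy. destruct (H1 y Hy) as [A1 A2]. destruct (H2 y Hy) as [A3 A4]. unfold E, E'.
    eapply dlim_eq. apply dplus; apply dmul; apply dminus; eauto. cbv beta; ring. }
  set (c := d * (B * B) / K).
  assert (HKp : 1 <= K) by (unfold K; lra).
  assert (HEb : forall y, a <= y <= b -> E' y <= K * E y + d * (B * B)).
  { intros y Hy. unfold E, E'. specialize (HK y Hy). specialize (HB y Hy). specialize (Hd y Hy).
    set (w := u1 y - u2 y). set (z := du1 y - du2 y).
    replace (- (Q1 y * u1 y) + Q2 y * u2 y) with (- (Q1 y * w) - (Q1 y - Q2 y) * u2 y) by (unfold w; ring).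
    set (e := Q1 y - Q2 y). fold e in Hd.
    apply Rabs_le_between in HK. apply Rabs_le_between in Hd.
    assert (HBb : u2 y * u2 y <= B * B).
    { assert (0 <= Rabs (u2 y)) by apply Rabs_pos.
      assert (Rabs (u2 y) * Rabs (u2 y) = u2 y * u2 y) by (rewrite <- Rabs_mult; apply Rabs_right; nra).
      nra. }
    assert (T1 : 2 * w * z * (1 - Q1 y) <= (K0 + 1) * (w * w + z * z)).
    { apply prod_bound. apply Rabs_le. lra. }
    assert (T2a : 2 * z * u2 y * (- e) <= d * (z * z + u2 y * u2 y))
      by (apply prod_bound; rewrite Rabs_Ropp; apply Rabs_le; lra).
    assert (T2b : d * (u2 y * u2 y) <= d * (B * B)) by (apply Rmult_le_compat_l; lra).
    assert (T2 : - 2 * z * e * u2 y <= d * (z * z) + d * (B * B)) by nra.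
    assert (0 <= w * w) by nra. assert (0 <= z*z) by nra.
    unfold K. nra. }
  set (F := fun y => (E y + c) * exp (- K * (y - a))).
  assert (HF : forall y, a <= y <= b -> derivable_pt_lim F y ((E' y - K * E y - K * c) * exp (- K * (y - a)))).
  { intros y Hy. unfold F. eapply dlim_eq. apply dmul. apply dplus. apply HE; lra. apply dconst. apply dexplin.
    cbv beta; ring. }
  assert (HFn : forall y, a <= y <= b -> (E' y - K * E y - K * c) * exp (- K * (y - a)) <= 0).
  { intros y Hy. assert (0 < exp (- K * (y - a))) by apply exp_pos.
    specialize (HEb y Hy). assert (K * c = d * (B * B)) by (unfold c; field; lra). nra. }
  pose proof (nonincr_deriv F _ a b HF HFn a x ltac:(lra) ltac:(lra) ltac:(lra)) as HFx.
  unfold F in HFx.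
  assert (HE0 : E a = 0) by (unfold E; rewrite Ha, Hda; ring).
  rewrite HE0, Rminus_diag, Rmult_0_r, exp_0, Rmult_1_r, Rplus_0_l in HFx.
  assert (Hex : exp (- K * (x - a)) * exp (K * (x - a)) = 1).
  { rewrite <- exp_plus. replace (- K * (x - a) + K * (x - a)) with 0 by ring. apply exp_0. }
  assert (0 < exp (K * (x - a))) by apply exp_pos.
  assert (exp (K * (x - a)) <= exp (K * (b - a))).
  { destruct (Req_dec x b) as [->|]; [lra|]. left. apply exp_increasing. nra. }
  assert (0 <= c) by (unfold c; apply Rle_mult_inv_pos; [apply Rmult_le_pos; nra | lra]).
  assert (Hc : c <= d * (B * B)).
  { unfold c. unfold Rdiv. assert (0 <= d * (B*B)) by (apply Rmult_le_pos; nra).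
    assert (/ K <= 1). { rewrite <- Rinv_1. apply Rinv_le_contravar; lra. } nra. }
  assert (HEx : E x + c <= c * exp (K * (x - a))).
  { assert (Hq : (E x + c) * exp (- K * (x - a)) * exp (K * (x - a)) <= c * exp (K * (x - a))) by nra.
    rewrite Rmult_assoc, Hex, Rmult_1_r in Hq. exact Hq. }
  fold E. unfold K in *.
  assert (0 <= E x) by (unfold E; cbv beta; apply Rplus_le_le_0_compat; apply Rle_0_sqr).
  assert (c * exp ((K0 + 3) * (x - a)) <= d * (B * B) * exp ((K0 + 3) * (b - a))).
  { apply Rmult_le_compat; auto; lra. }
  unfold E in HEx; cbv beta in HEx. lra.
Qed.

Lemma sturm_pos Q1 Q2 a b u du v dv : a < b -> sol Q1 a b u du -> sol Q2 a b v dv ->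
  (forall x, a <= x <= b -> Q1 x < Q2 x) -> u a = 0 -> u b = 0 ->
  (forall x, a < x < b -> 0 < u x) -> (forall x, a < x < b -> 0 < v x) -> False.
Proof.
  intros Hab Hu Hv HQ Hua Hub Hup Hvp.
  set (W := fun y => du y * v y - u y * dv y).
  set (W' := fun y => (Q2 y - Q1 y) * u y * v y).
  assert (HW : forall y, a <= y <= b -> derivable_pt_lim W y (W' y)).
  { intros y Hy. destruct (Hu y Hy). destruct (Hv y Hy). unfold W, W'.
    eapply dlim_eq. apply dminus; apply dmul; eauto. cbv beta; ring. }
  destruct (MVT_cor2 W W' a b Hab HW) as [c [Hc1 Hc2]].
  assert (0 < W' c) by (unfold W'; specialize (HQ c ltac:(lra)); specialize (Hup c Hc2); specialize (Hvp c Hc2);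
     apply Rmult_lt_0_compat; [apply Rmult_lt_0_compat|]; lra).
  assert (HWa : 0 <= W a).
  { unfold W. rewrite Hua. destruct (Hu a ltac:(lra)) as [Hd _].
    assert (0 <= du a).
    { apply (deriv_nonneg_right u a _ Hd). exists (b - a). split; [lra|]. intros h Hh. rewrite Hua.
      left. apply Hup. lra. }
    assert (0 <= v a).
    { destruct (Rle_or_lt 0 (v a)) as [|Hneg]; auto. exfalso.
      pose proof (sol_cont_u Q2 a b v dv Hv a ltac:(lra)) as Hc.
      destruct (Hc (- v a) ltac:(lra)) as [al [Hal Hal2]].
      set (t := a + Rmin al (b - a) / 2).
      assert (a < t < b /\ t - a < al) by (unfold t; unfold Rmin; destruct (Rle_dec al (b-a)); lra).
      specialize (Hal2 t). simpl in Hal2. unfold R_dist, D_x, no_cond in Hal2.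
      assert (Habs : Rabs (v t - v a) < - v a). { apply Hal2. split. split; auto. lra.
        rewrite Rabs_right; lra. }
      specialize (Hvp t ltac:(lra)). apply Rabs_lt_between in Habs. lra. }
    nra. }
  assert (HWb : W b <= 0).
  { unfold W. rewrite Hub. destruct (Hu b ltac:(lra)) as [Hd _].
    assert (du b <= 0).
    { apply (deriv_nonpos_left u b _ Hd). exists (b - a). split; [lra|]. intros h Hh. rewrite Hub.
      left. apply Hup. lra. }
    assert (0 <= v b).
    { destruct (Rle_or_lt 0 (v b)) as [|Hneg]; auto. exfalso.
      pose proof (sol_cont_u Q2 a b v dv Hv b ltac:(lra)) as Hc.
      destruct (Hc (- v b) ltac:(lra)) as [al [Hal Hal2]].
      set (t := b - Rmin al (b - a) / 2).
      assert (a < t < b /\ b - t < al) by (unfold t; unfold Rmin; destruct (Rle_dec al (b-a)); lra).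
      specialize (Hal2 t). simpl in Hal2. unfold R_dist, D_x, no_cond in Hal2.
      assert (Habs : Rabs (v t - v b) < - v b). { apply Hal2. split. split; auto. lra.
        rewrite Rabs_left; lra. }
      specialize (Hvp t ltac:(lra)). apply Rabs_lt_between in Habs. lra. }
    nra. }
  assert (0 < W' c * (b - a)) by (apply Rmult_lt_0_compat; lra).
  lra.
Qed.

Lemma sol_opp Q a b u du : sol Q a b u du -> sol Q a b (fun y => - u y) (fun y => - du y).
Proof.
  intros H y Hy. destruct (H y Hy). split.
  apply derivable_pt_lim_opp; auto.
  eapply dlim_eq. apply derivable_pt_lim_opp. eauto. ring.
Qed.

Lemma sturm Q1 Q2 a b u du v dv : a < b -> sol Q1 a b u du -> sol Q2 a b v dv ->
  (forall x, a <= x <= b -> Q1 x < Q2 x) -> u a = 0 -> u b = 0 ->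
  (forall x, a < x < b -> u x <> 0) -> exists x, a < x < b /\ v x = 0.
Proof.
  intros Hab Hu Hv HQ Hua Hub Hnz.
  destruct (Classical_Prop.classic (exists x, a < x < b /\ v x = 0)) as [|Hno]; auto. exfalso.
  assert (Hvnz : forall x, a < x < b -> v x <> 0) by (intros x Hx E; apply Hno; exists x; auto).
  destruct (const_sign u a b Hab (sol_cont_u _ _ _ _ _ Hu) Hnz) as [Up|Un];
  destruct (const_sign v a b Hab (sol_cont_u _ _ _ _ _ Hv) Hvnz) as [Vp|Vn].
  - apply (sturm_pos Q1 Q2 a b u du v dv); auto.
  - apply (sturm_pos Q1 Q2 a b u du (fun y => - v y) (fun y => - dv y)); auto.
    apply sol_opp; auto. intros x Hx; specialize (Vn x Hx); lra.
  - apply (sturm_pos Q1 Q2 a b (fun y => - u y) (fun y => - du y) v dv); auto.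
    apply sol_opp; auto. rewrite Hua; ring. rewrite Hub; ring. intros x Hx; specialize (Un x Hx); lra.
  - apply (sturm_pos Q1 Q2 a b (fun y => - u y) (fun y => - du y) (fun y => - v y) (fun y => - dv y)); auto;
    try apply sol_opp; auto. rewrite Hua; ring. rewrite Hub; ring.
    intros x Hx; specialize (Un x Hx); lra. intros x Hx; specialize (Vn x Hx); lra.
Qed.

Lemma cont_nz_near f x : continuity_pt f x -> f x <> 0 ->
  exists al, al > 0 /\ forall y, Rabs (y - x) < al -> f y <> 0.
Proof.
  intros Hc Hne. assert (Hp : 0 < Rabs (f x)) by (apply Rabs_pos_lt; auto).
  destruct (Hc (Rabs (f x)) Hp) as [al [Hal H]].
  exists al. split; auto. intros y Hy E.
  destruct (Req_dec y x) as [->|Hyx]; [contradiction|].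
  specialize (H y). simpl in H. unfold R_dist, D_x, no_cond in H.
  assert (Rabs (f y - f x) < Rabs (f x)) by (apply H; split; [split; auto | auto]).
  rewrite E, Rminus_0_l, Rabs_Ropp in H0. lra.
Qed.

Lemma first_zero f a z eta : a < z -> (forall x, a <= x <= z -> continuity_pt f x) -> f z = 0 ->
  0 < eta -> (forall x, a < x < a + eta -> f x <> 0) ->
  exists z1, a < z1 <= z /\ f z1 = 0 /\ forall x, a < x < z1 -> f x <> 0.
Proof.
  intros Haz Hc Hfz Heta Hnear.
  set (E := fun y => a < - y <= z /\ f (- y) = 0).
  assert (HZ : forall x, a < x -> f x = 0 -> a + eta <= x).
  { intros x Hx Ex. destruct (Rlt_or_le x (a + eta)) as [Hl|]; auto. exfalso. apply (Hnear x); auto. }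
  assert (Hb : bound E).
  { exists (- (a + eta)). intros y [Hy1 Hy2]. specialize (HZ (-y) (proj1 Hy1) Hy2). lra. }
  assert (Hne : exists y, E y) by (exists (- z); unfold E; rewrite Ropp_involutive; split; [lra|auto]).
  destruct (completeness E Hb Hne) as [l [Hub Hlub]].
  assert (Hl1 : - z <= l) by (apply Hub; unfold E; rewrite Ropp_involutive; split; [lra|auto]).
  assert (Hl2 : l <= - (a + eta)).
  { apply Hlub. intros y [Hy1 Hy2]. specialize (HZ (-y) (proj1 Hy1) Hy2). lra. }
  exists (- l). split; [lra|]. split.
  - destruct (Req_dec (f (- l)) 0) as [|Hnz]; auto. exfalso.
    destruct (cont_nz_near f (- l) (Hc (- l) ltac:(lra)) Hnz) as [al [Hal Hnz2]].
    assert (l <= - (- l + al / 2)).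
    { apply Hlub. intros y [Hy1 Hy2].
      assert (Hyl : y <= l) by (apply Hub; split; auto).
      destruct (Rle_or_lt (- y) (- l + al / 2)) as [Hc2|]; [|lra].
      exfalso. apply (Hnz2 (- y)); auto. apply Rabs_def1; lra. }
    lra.
  - intros x Hx Ex. assert (- x <= l) by (apply Hub; split; rewrite Ropp_involutive; [lra|auto]). lra.
Qed.

Lemma last_zero f z b eta : z < b -> (forall x, z <= x <= b -> continuity_pt f x) -> f z = 0 ->
  0 < eta -> (forall x, b - eta < x < b -> f x <> 0) ->
  exists z2, z <= z2 < b /\ f z2 = 0 /\ forall x, z2 < x < b -> f x <> 0.
Proof.
  intros Hzb Hc Hfz Heta Hnear.
  destruct (first_zero (fun x => f (- x)) (- b) (- z) eta) as [z1 [Hz1 [Hz1b Hz1c]]]; try lra.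
  - intros x Hx. apply (continuity_pt_comp (fun x => - x) f). apply continuity_pt_opp, continuity_pt_id.
    apply Hc; lra.
  - rewrite Ropp_involutive; auto.
  - intros x Hx. apply Hnear. lra.
  - exists (- z1). split; [lra|]. split; auto. intros x Hx E. apply (Hz1c (- x)). lra.
    rewrite Ropp_involutive; auto.
Qed.

Lemma deriv_nz_near f x l : derivable_pt_lim f x l -> f x = 0 -> l <> 0 ->
  exists eta, 0 < eta /\ (forall y, x < y < x + eta -> f y <> 0) /\ (forall y, x - eta < y < x -> f y <> 0).
Proof.
  intros H Hf Hl. destruct (Rlt_or_le 0 l) as [Hp|Hn].
  - destruct (deriv_pos_right f x l H Hp) as [d1 [Hd1 H1]].
    destruct (deriv_pos_left f x l H Hp) as [d2 [Hd2 H2]].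
    exists (Rmin d1 d2). split. apply Rmin_pos; lra. split.
    + intros y Hy. specialize (H1 (y - x)). replace (x + (y - x)) with y in H1 by ring.
      assert (Rmin d1 d2 <= d1) by apply Rmin_l. specialize (H1 ltac:(lra)). lra.
    + intros y Hy. specialize (H2 (x - y)). replace (x - (x - y)) with y in H2 by ring.
      assert (Rmin d1 d2 <= d2) by apply Rmin_r. specialize (H2 ltac:(lra)). lra.
  - assert (Hn' : l < 0) by lra.
    destruct (deriv_neg_right f x l H Hn') as [d1 [Hd1 H1]].
    destruct (deriv_neg_left f x l H Hn') as [d2 [Hd2 H2]].
    exists (Rmin d1 d2). split. apply Rmin_pos; lra. split.
    + intros y Hy. specialize (H1 (y - x)). replace (x + (y - x)) with y in H1 by ring.
      assert (Rmin d1 d2 <= d1) by apply Rmin_l. specialize (H1 ltac:(lra)). lra.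
    + intros y Hy. specialize (H2 (x - y)). replace (x - (x - y)) with y in H2 by ring.
      assert (Rmin d1 d2 <= d2) by apply Rmin_r. specialize (H2 ltac:(lra)). lra.
Qed.

Lemma cpt_cont f x : continuity_pt f x -> continuous f x.
Proof. intro H. apply continuity_pt_filterlim. exact H. Qed.
Lemma cont_cpt f x : continuous f x -> continuity_pt f x.
Proof. intro H. apply continuity_pt_filterlim. exact H. Qed.

Lemma ftc g a : (forall x, continuous g x) -> forall x, derivable_pt_lim (fun y => RInt g a y) x (g x).
Proof.
  intros Hg x. apply is_derive_Reals.
  apply (is_derive_RInt g (fun y => RInt g a y) a x).
  - apply filter_forall. intros y. apply RInt_correct. apply (@ex_RInt_continuous R_CompleteNormedModule). intros; auto.
  - auto.
Qed.

Definition slim (fn : nat -> R -> R) (y : R) : R :=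
  real (Lim_seq (fun N => sum_f_R0 (fun n => fn n y) N)).

Lemma slim_val fn y l : Un_cv (fun N => sum_f_R0 (fun n => fn n y) N) l -> slim fn y = l.
Proof.
  intro H. unfold slim. rewrite (is_lim_seq_unique _ l). reflexivity. apply is_lim_seq_Reals. exact H.
Qed.

Lemma series_cv (s A : nat -> R) lA : (forall n, Rabs (s n) <= A n) -> Un_cv (sum_f_R0 A) lA ->
  exists l, Un_cv (sum_f_R0 s) l.
Proof.
  intros Hb HA.
  destruct (Rseries_CV_comp (fun n => (Rabs (s n) + s n) / 2) A) as [l1 H1].
  { intro n. specialize (Hb n). pose proof (Rabs_le_between _ _ (Rle_refl (Rabs (s n)))).
    split; lra. }
  { exists lA. exact HA. }
  destruct (Rseries_CV_comp (fun n => (Rabs (s n) - s n) / 2) A) as [l2 H2].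
  { intro n. specialize (Hb n). pose proof (Rabs_le_between _ _ (Rle_refl (Rabs (s n)))).
    split; lra. }
  { exists lA. exact HA. }
  exists (l1 - l2).
  pose proof (CV_minus _ _ _ _ H1 H2) as H.
  intros eps Heps. destruct (H eps Heps) as [N HN]. exists N. intros n Hn.
  specialize (HN n Hn). cbv beta in HN. rewrite <- minus_sum in HN.
  replace (sum_f_R0 s n) with (sum_f_R0 (fun i => (Rabs (s i) + s i) / 2 - (Rabs (s i) - s i) / 2) n); auto.
  apply sum_eq. intros. field.
Qed.

Lemma weier (fn : nat -> R -> R) (A : nat -> R) lA c (r : posreal) :
  (forall n y, Boule c r y -> Rabs (fn n y) <= A n) -> Un_cv (sum_f_R0 A) lA ->
  (forall y, Boule c r y -> Un_cv (fun N => sum_f_R0 (fun n => fn n y) N) (slim fn y)) /\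
  CVU (fun N y => sum_f_R0 (fun n => fn n y) N) (slim fn) c r.
Proof.
  intros Hb HA.
  assert (Hp : forall y, Boule c r y -> Un_cv (fun N => sum_f_R0 (fun n => fn n y) N) (slim fn y)).
  { intros y Hy. destruct (series_cv (fun n => fn n y) A lA) as [l Hl]; auto.
    rewrite (slim_val fn y l Hl). exact Hl. }
  split; auto.
  intros eps Heps. destruct (HA eps Heps) as [N HN]. exists N. intros n y Hn Hy.
  pose proof (sum_maj1 fn A y (slim fn y) lA n (Hp y Hy) HA (fun k => Hb k y Hy)) as H.
  specialize (HN n Hn). unfold R_dist in HN. unfold SP in H.
  apply Rabs_lt_between in HN. eapply Rle_lt_trans; [exact H|]. lra.
Qed.

Lemma sum_deriv (fn fn' : nat -> R -> R) y : (forall n, derivable_pt_lim (fn n) y (fn' n y)) ->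
  forall N, derivable_pt_lim (fun z => sum_f_R0 (fun n => fn n z) N) y (sum_f_R0 (fun n => fn' n y) N).
Proof.
  intros H N. induction N as [|N IH].
  - simpl. apply H.
  - simpl. apply dplus; auto.
Qed.

Lemma series_deriv (fn fn' : nat -> R -> R) A A' lA lA' c (r : posreal) :
  (forall n y, Boule c r y -> derivable_pt_lim (fn n) y (fn' n y)) ->
  (forall n y, Boule c r y -> Rabs (fn n y) <= A n) -> Un_cv (sum_f_R0 A) lA ->
  (forall n y, Boule c r y -> Rabs (fn' n y) <= A' n) -> Un_cv (sum_f_R0 A') lA' ->
  forall x, Boule c r x -> derivable_pt_lim (slim fn) x (slim fn' x).
Proof.
  intros Hd Hb HA Hb' HA' x Hx.
  destruct (weier fn A lA c r Hb HA) as [P1 _].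
  destruct (weier fn' A' lA' c r Hb' HA') as [_ C2].
  apply (CVU_derivable (fun N y => sum_f_R0 (fun n => fn n y) N) (fun N y => sum_f_R0 (fun n => fn' n y) N)
    (slim fn) (slim fn') c r C2 P1); auto.
  intros n y Hy. apply sum_deriv. intros k. apply Hd; auto.
Qed.

Lemma cv_shift (v w : nat -> R) l : v 0%nat = 0 -> (forall k, v (S k) = w k) ->
  Un_cv (sum_f_R0 w) l -> Un_cv (sum_f_R0 v) l.
Proof.
  intros H0 HS H.
  assert (E : forall N, sum_f_R0 v (S N) = sum_f_R0 w N).
  { induction N as [|N IH]. simpl. rewrite H0, HS. ring. simpl. simpl in IH. rewrite IH, HS. reflexivity. }
  intros eps Heps. destruct (H eps Heps) as [N HN]. exists (S N). intros n Hn.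
  destruct n as [|n]; [lia|]. rewrite E. apply HN. lia.
Qed.

Lemma exp_series_cv B x : Un_cv (sum_f_R0 (fun n => B * x ^ n / INR (Factorial.fact n))) (B * exp x).
Proof.
  pose proof (proj2_sig (exist_exp x)) as H. fold (exp x) in H. unfold exp_in, infinite_sum in H.
  assert (H' : Un_cv (sum_f_R0 (fun i => / INR (Factorial.fact i) * x ^ i)) (exp x)).
  { intros eps He. destruct (H eps He) as [N HN]. exists N. intros n Hn. apply HN. lia. }
  assert (Hc : Un_cv (fun _ => B) B) by (intros e He; exists 0%nat; intros; unfold R_dist; rewrite Rminus_diag, Rabs_R0; lra).
  pose proof (CV_mult (fun _ => B) _ B (exp x) Hc H') as HM.
  intros eps He. destruct (HM eps He) as [N HN]. exists N. intros n Hn. specialize (HN n Hn).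
  rewrite scal_sum in HN. erewrite sum_eq; [exact HN|]. intros i _. simpl. unfold Rdiv. ring.
Qed.

Lemma cmp_bound F F' a r n c : (forall t, derivable_pt_lim F t (F' t)) -> F a = 0 -> 0 <= c ->
  (forall t, Rabs (t - a) <= r -> Rabs (F' t) <= c * Rabs (t - a) ^ n) ->
  forall x, Rabs (x - a) <= r -> Rabs (F x) <= c * Rabs (x - a) ^ (S n) / (INR n + 1).
Proof.
  intros HF Fa Hc Hb x Hx.
  assert (Hn : 0 < INR n + 1) by (pose proof (pos_INR n); lra).
  destruct (Rle_or_lt a x) as [Hax|Hax].
  - set (G := fun t => c * (t - a) ^ (S n) / (INR n + 1)).
    assert (HG : forall t, derivable_pt_lim G t (c * (t - a) ^ n)).
    { intros t. apply is_derive_Reals. unfold G. auto_derive; auto. replace (match n with | 0%nat => 1 | S _ => INR n + 1 end) with (INR n + 1) by (destruct n; simpl; ring). replace (t + - a) with (t - a) by ring. field. lra. }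
    assert (Hab : forall t, a <= t <= x -> Rabs (t - a) <= r) by (intros t Ht; rewrite Rabs_right in *; lra).
    assert (H1 : G a - F a <= G x - F x).
    { apply (nondecr_deriv (fun t => G t - F t) (fun t => c * (t - a) ^ n - F' t) a x); try lra.
      intros t Ht. apply dminus; auto.
      intros t Ht. specialize (Hb t (Hab t Ht)). rewrite (Rabs_right (t - a)) in Hb by lra.
      apply Rabs_le_between in Hb. lra. }
    assert (H2 : G a + F a <= G x + F x).
    { apply (nondecr_deriv (fun t => G t + F t) (fun t => c * (t - a) ^ n + F' t) a x); try lra.
      intros t Ht. apply dplus; auto.
      intros t Ht. specialize (Hb t (Hab t Ht)). rewrite (Rabs_right (t - a)) in Hb by lra.
      apply Rabs_le_between in Hb. lra. }
    unfold G in H1, H2. rewrite Fa, Rminus_diag in H1, H2. rewrite pow_i in H1, H2 by lia.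
    rewrite (Rabs_right (x - a)) by lra. apply Rabs_le. unfold Rdiv in *. lra.
  - set (G := fun t => c * (a - t) ^ (S n) / (INR n + 1)).
    assert (HG : forall t, derivable_pt_lim G t (- (c * (a - t) ^ n))).
    { intros t. apply is_derive_Reals. unfold G. auto_derive; auto. replace (match n with | 0%nat => 1 | S _ => INR n + 1 end) with (INR n + 1) by (destruct n; simpl; ring). replace (a + - t) with (a - t) by ring. field. lra. }
    assert (Hab : forall t, x <= t <= a -> Rabs (t - a) <= r)
      by (intros t Ht; rewrite Rabs_left1 in *; lra).
    assert (H1 : G a - F a <= G x - F x).
    { apply (nonincr_deriv (fun t => G t - F t) (fun t => - (c * (a - t) ^ n) - F' t) x a); try lra.
      intros t Ht. apply dminus; auto.
      intros t Ht. specialize (Hb t (Hab t Ht)). rewrite (Rabs_left1 (t - a)) in Hb by lra.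
      replace (- (t - a)) with (a - t) in Hb by ring.
      apply Rabs_le_between in Hb. lra. }
    assert (H2 : G a + F a <= G x + F x).
    { apply (nonincr_deriv (fun t => G t + F t) (fun t => - (c * (a - t) ^ n) + F' t) x a); try lra.
      intros t Ht. apply dplus; auto.
      intros t Ht. specialize (Hb t (Hab t Ht)). rewrite (Rabs_left1 (t - a)) in Hb by lra.
      replace (- (t - a)) with (a - t) in Hb by ring.
      apply Rabs_le_between in Hb. lra. }
    unfold G in H1, H2. rewrite Fa, Rminus_diag in H1, H2. rewrite pow_i in H1, H2 by lia.
    rewrite (Rabs_left1 (x - a)) by lra. replace (- (x - a)) with (a - x) by ring.
    apply Rabs_le. unfold Rdiv in *. lra.
Qed.

Fixpoint UDit (Q : R -> R) (a al be : R) (n : nat) : (R -> R) * (R -> R) :=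
  match n with
  | O => (fun _ => al, fun _ => be)
  | S k => (fun x => RInt (snd (UDit Q a al be k)) a x,
            fun x => RInt (fun t => - (Q t * fst (UDit Q a al be k) t)) a x)
  end.

Lemma RInt_pt0 f a : RInt f a a = 0.
Proof. rewrite RInt_point. reflexivity. Qed.

Lemma UD_cont Q a al be : (forall x, continuity_pt Q x) -> forall n,
  (forall x, continuity_pt (fst (UDit Q a al be n)) x) /\ (forall x, continuity_pt (snd (UDit Q a al be n)) x).
Proof.
  intros HQ n. induction n as [|n [IH1 IH2]].
  - simpl. split; intros; apply continuity_pt_const; intros u v; reflexivity.
  - simpl. split; intros x.
    + apply (dlim_cont _ x (snd (UDit Q a al be n) x)). apply ftc. intros y. apply cpt_cont. auto.
    + apply (dlim_cont _ x (- (Q x * fst (UDit Q a al be n) x))).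
      apply (ftc (fun t => - (Q t * fst (UDit Q a al be n) t))). intros y. apply cpt_cont.
      apply continuity_pt_opp. apply continuity_pt_mult; auto.
Qed.

Lemma UD_deriv Q a al be : (forall x, continuity_pt Q x) -> forall n x,
  derivable_pt_lim (fst (UDit Q a al be (S n))) x (snd (UDit Q a al be n) x) /\
  derivable_pt_lim (snd (UDit Q a al be (S n))) x (- (Q x * fst (UDit Q a al be n) x)).
Proof.
  intros HQ n x. destruct (UD_cont Q a al be HQ n) as [C1 C2]. simpl. split.
  - apply ftc. intros y. apply cpt_cont. auto.
  - apply (ftc (fun t => - (Q t * fst (UDit Q a al be n) t))). intros y. apply cpt_cont.
    apply continuity_pt_opp. apply continuity_pt_mult; auto.
Qed.

Lemma fact_S_INR n : INR (Factorial.fact (S n)) = (INR n + 1) * INR (Factorial.fact n).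
Proof. simpl (Factorial.fact (S n)). rewrite plus_INR, mult_INR. ring. Qed.

Lemma UD_bound Q a al be r M : (forall x, continuity_pt Q x) -> 0 <= M ->
  (forall t, Rabs (t - a) <= r -> Rabs (Q t) <= M) ->
  forall n x, Rabs (x - a) <= r ->
    Rabs (fst (UDit Q a al be n) x) <= (Rabs al + Rabs be) * ((M + 1) * Rabs (x - a)) ^ n / INR (Factorial.fact n) /\
    Rabs (snd (UDit Q a al be n) x) <= (Rabs al + Rabs be) * ((M + 1) * Rabs (x - a)) ^ n / INR (Factorial.fact n).
Proof.
  intros HQ HM HQb n. set (B := Rabs al + Rabs be). set (K := M + 1).
  assert (HB : 0 <= B) by (unfold B; pose proof (Rabs_pos al); pose proof (Rabs_pos be); lra).
  induction n as [|n IH]; intros x Hx.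
  - simpl. unfold B. pose proof (Rabs_pos al); pose proof (Rabs_pos be). split; lra.
  - set (c := B * K ^ (S n) / INR (Factorial.fact n)).
    assert (Hf : 0 < INR (Factorial.fact n)) by (apply lt_0_INR; apply Factorial.lt_O_fact).
    assert (Hc : 0 <= c) by (unfold c; apply Rle_mult_inv_pos; [apply Rmult_le_pos; [lra| apply pow_le; unfold K; lra] | lra]).
    assert (Hfin : c * Rabs (x - a) ^ S n / (INR n + 1) = B * (K * Rabs (x - a)) ^ S n / INR (Factorial.fact (S n))).
    { rewrite fact_S_INR. unfold c. rewrite Rpow_mult_distr. field. split; [lra|]. pose proof (pos_INR n); lra. }
    split.
    + rewrite <- Hfin. apply (cmp_bound _ (snd (UDit Q a al be n)) a r n c); auto.
      * intros t. apply (UD_deriv Q a al be HQ n t).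
      * simpl. apply RInt_pt0.
      * intros t Ht. destruct (IH t Ht) as [_ H2]. eapply Rle_trans; [exact H2|].
        unfold c. rewrite Rpow_mult_distr. unfold Rdiv.
        assert (0 <= Rabs (t - a) ^ n) by (apply pow_le; apply Rabs_pos).
        assert (K ^ n <= K ^ S n).
        { simpl. assert (0 <= K^n) by (apply pow_le; unfold K; lra). assert (1 <= K) by (unfold K; lra). nra. }
        assert (0 < / INR (Factorial.fact n)) by (apply Rinv_0_lt_compat; lra).
        assert (B * (K ^ n * Rabs (t - a) ^ n) <= B * K ^ S n * Rabs (t - a) ^ n).
        { rewrite Rmult_assoc. apply Rmult_le_compat_l; auto. apply Rmult_le_compat_r; auto. }
        nra.
    + rewrite <- Hfin. apply (cmp_bound _ (fun t => - (Q t * fst (UDit Q a al be n) t)) a r n c); auto.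
      * intros t. apply (UD_deriv Q a al be HQ n t).
      * simpl. apply RInt_pt0.
      * intros t Ht. destruct (IH t Ht) as [H1 _]. rewrite Rabs_Ropp, Rabs_mult.
        specialize (HQb t Ht).
        unfold c. rewrite Rpow_mult_distr in H1. simpl (K ^ S n).
        assert (0 <= Rabs (t - a) ^ n) by (apply pow_le; apply Rabs_pos).
        assert (0 <= K ^ n) by (apply pow_le; unfold K; lra).
        assert (0 < / INR (Factorial.fact n)) by (apply Rinv_0_lt_compat; lra).
        unfold Rdiv in *.
        apply Rle_trans with (M * (B * (K ^ n * Rabs (t - a) ^ n) * / INR (Factorial.fact n))).
        { apply Rmult_le_compat; auto; apply Rabs_pos. }
        assert (0 <= B * (K ^ n * Rabs (t - a) ^ n) * / INR (Factorial.fact n)).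
        { apply Rmult_le_pos; [apply Rmult_le_pos; [lra| apply Rmult_le_pos; auto]| lra]. }
        unfold K in *. nra.
Qed.

Lemma ode_exists Q a al be r : (forall x, continuity_pt Q x) -> 0 < r ->
  exists u du, u a = al /\ du a = be /\ forall x, Rabs (x - a) < r ->
    derivable_pt_lim u x (du x) /\ derivable_pt_lim du x (- (Q x * u x)).
Proof.
  intros HQ Hr.
  destruct (bound_on Q (a - r) (a + r) ltac:(lra) (fun x _ => HQ x)) as [M [HM HMb]].
  assert (HQb : forall t, Rabs (t - a) <= r -> Rabs (Q t) <= M).
  { intros t Ht. apply HMb. apply Rabs_le_between in Ht. lra. }
  set (rp := mkposreal r Hr).
  set (U := fun n => fst (UDit Q a al be n)). set (D := fun n => snd (UDit Q a al be n)).
  set (B := Rabs al + Rabs be). set (K := M + 1).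
  assert (HB : 0 <= B) by (unfold B; pose proof (Rabs_pos al); pose proof (Rabs_pos be); lra).
  set (A := fun n => B * (K * r) ^ n / INR (Factorial.fact n)).
  assert (Hbnd : forall n y, Boule a rp y -> Rabs (U n y) <= A n /\ Rabs (D n y) <= A n).
  { intros n y Hy. unfold Boule in Hy. simpl in Hy.
    destruct (UD_bound Q a al be r M HQ HM HQb n y ltac:(lra)) as [H1 H2].
    assert (Hp : ((M + 1) * Rabs (y - a)) ^ n <= (K * r) ^ n).
    { apply pow_incr. split. apply Rmult_le_pos; [lra| apply Rabs_pos]. unfold K.
      apply Rmult_le_compat_l; lra. }
    assert (Hf : 0 < INR (Factorial.fact n)) by (apply lt_0_INR; apply Factorial.lt_O_fact).
    assert (Hq : B * ((M + 1) * Rabs (y - a)) ^ n / INR (Factorial.fact n) <= A n).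
    { unfold A, Rdiv. apply Rmult_le_compat_r. left; apply Rinv_0_lt_compat; lra.
      apply Rmult_le_compat_l; auto. }
    fold B in H1, H2. unfold U, D. split; lra. }
  assert (HA : Un_cv (sum_f_R0 A) (B * exp (K * r))) by apply exp_series_cv.
  destruct (weier U A _ a rp (fun n y Hy => proj1 (Hbnd n y Hy)) HA) as [PU _].
  destruct (weier D A _ a rp (fun n y Hy => proj2 (Hbnd n y Hy)) HA) as [PD _].
  set (U' := fun n => match n with O => fun _ : R => 0 | S k => D k end).
  set (A' := fun n => match n with O => 0 | S k => A k end).
  assert (HA' : Un_cv (sum_f_R0 A') (B * exp (K * r))) by (apply (cv_shift A' A); auto).
  set (D' := fun n => match n with O => fun _ : R => 0 | S k => fun t => - (Q t * U k t) end).
  set (A'' := fun n => match n with O => 0 | S k => (K * B) * (K * r) ^ k / INR (Factorial.fact k) end).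
  assert (HA'' : Un_cv (sum_f_R0 A'') ((K * B) * exp (K * r))).
  { apply (cv_shift A'' (fun k => (K * B) * (K * r) ^ k / INR (Factorial.fact k))); auto.
    apply exp_series_cv. }
  assert (Hder : forall x, Boule a rp x -> derivable_pt_lim (slim U) x (slim U' x)).
  { apply (series_deriv U U' A A' (B * exp (K * r)) (B * exp (K * r)) a rp).
    - intros n y Hy. destruct n as [|k]. simpl. unfold U; simpl. apply derivable_pt_lim_const.
      unfold U, U', D. apply (UD_deriv Q a al be HQ k y).
    - intros n y Hy. apply (Hbnd n y Hy).
    - exact HA.
    - intros n y Hy. destruct n as [|k]; simpl. rewrite Rabs_R0; lra. apply (Hbnd k y Hy).
    - exact HA'. }
  assert (Hder2 : forall x, Boule a rp x -> derivable_pt_lim (slim D) x (slim D' x)).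
  { apply (series_deriv D D' A A'' (B * exp (K * r)) (K * B * exp (K * r)) a rp).
    - intros n y Hy. destruct n as [|k]. simpl. unfold D; simpl. apply derivable_pt_lim_const.
      unfold D, D', U. apply (UD_deriv Q a al be HQ k y).
    - intros n y Hy. apply (Hbnd n y Hy).
    - exact HA.
    - intros n y Hy. destruct n as [|k]; simpl. rewrite Rabs_R0; lra.
      rewrite Rabs_Ropp, Rabs_mult. destruct (Hbnd k y Hy) as [H1 _].
      assert (Rabs (Q y) <= K). { unfold K. unfold Boule in Hy; simpl in Hy. specialize (HQb y ltac:(lra)). lra. }
      assert (A k * K = K * B * (K * r) ^ k / INR (Factorial.fact k)) by (unfold A, Rdiv; ring).
      rewrite <- H0. rewrite Rmult_comm. apply Rmult_le_compat; auto; apply Rabs_pos.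
    - exact HA''. }
  exists (slim U), (slim D).
  assert (Ha : Boule a rp a) by (unfold Boule; simpl; rewrite Rminus_diag, Rabs_R0; lra).
  split; [|split].
  - apply slim_val. intros eps He. exists 0%nat. intros n _.
    assert (E : sum_f_R0 (fun k => U k a) n = al).
    { induction n as [|n IH]. reflexivity. simpl. rewrite IH. unfold U. simpl. rewrite RInt_pt0. ring. }
    rewrite E. unfold R_dist. rewrite Rminus_diag, Rabs_R0. lra.
  - apply slim_val. intros eps He. exists 0%nat. intros n _.
    assert (E : sum_f_R0 (fun k => D k a) n = be).
    { induction n as [|n IH]. reflexivity. simpl. rewrite IH. unfold D. simpl. rewrite RInt_pt0. ring. }
    rewrite E. unfold R_dist. rewrite Rminus_diag, Rabs_R0. lra.
  - intros x Hx. assert (Hb : Boule a rp x) by (unfold Boule; simpl; lra).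
    split.
    + replace (slim D x) with (slim U' x). apply Hder; auto.
      apply slim_val. apply (cv_shift (fun n => U' n x) (fun n => D n x)); auto.
    + replace (- (Q x * slim U x)) with (slim D' x). apply Hder2; auto.
      apply slim_val. apply (cv_shift (fun n => D' n x) (fun n => - (Q x * U n x))); auto.
      assert (Hc : Un_cv (fun _ => - Q x) (- Q x))
        by (intros e He; exists 0%nat; intros; unfold R_dist; rewrite Rminus_diag, Rabs_R0; lra).
      pose proof (CV_mult _ _ _ _ Hc (PU x Hb)) as HM2.
      intros eps He. destruct (HM2 eps He) as [N HN]. exists N. intros n Hn. specialize (HN n Hn).
      rewrite scal_sum in HN. replace (- (Q x * slim U x)) with (- Q x * slim U x) by ring.
      erewrite sum_eq; [exact HN|]. intros i _. cbv beta. ring.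
Qed.

Lemma div_le a b c d : 0 < b -> 0 < d -> a * d <= c * b -> a / b <= c / d.
Proof.
  intros Hb Hd H.
  assert (E : c / d - a / b = (c * b - a * d) / (b * d)) by (field; lra).
  assert (0 <= (c * b - a * d) / (b * d)) by (apply Rle_mult_inv_pos; nra).
  lra.
Qed.

Lemma le_eps x e : (forall eta, 0 < eta -> x < e + eta) -> x <= e.
Proof.
  intros H. destruct (Rle_or_lt x e) as [|Hlt]; auto.
  specialize (H ((x - e) / 2) ltac:(lra)). lra.
Qed.

Lemma int_bound g V C k a b : 0 < V -> 0 <= C -> 0 <= k -> a <= b ->
  (forall v, continuity_pt g v) ->
  (forall v, a <= v <= b -> Rabs (g v) <= k * (32 * C / (V * V + v * v))) ->
  Rabs (RInt g a b) <= k * (32 * C * PI / V).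
Proof.
  intros HV HC Hk Hab Hg Hb.
  set (h := fun v => k * (32 * C / (V * V + v * v))).
  assert (Hgi : ex_RInt g a b) by (apply (@ex_RInt_continuous R_CompleteNormedModule); intros; apply cpt_cont; auto).
  assert (Hgai : ex_RInt (fun t => Rabs (g t)) a b).
  { apply (@ex_RInt_continuous R_CompleteNormedModule); intros; apply cpt_cont. apply (continuity_pt_comp g Rabs); auto.
    apply Rcontinuity_abs. }
  assert (Hpos : forall t, 0 < V * V + t * t) by (intros; nra).
  assert (Hhc : forall t, continuity_pt h t).
  { intros t. unfold h. apply continuity_pt_scal. apply continuity_pt_div.
    apply continuity_pt_const; intros u w; reflexivity.
    apply continuity_pt_plus. apply continuity_pt_const; intros u w; reflexivity.
    apply continuity_pt_mult; apply continuity_pt_id. specialize (Hpos t). lra. }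
  assert (Hhi : ex_RInt h a b) by (apply (@ex_RInt_continuous R_CompleteNormedModule); intros; apply cpt_cont; auto).
  set (F := fun t => k * (32 * C / V) * atan (t / V)).
  assert (HF : forall t, derivable_pt_lim F t (h t)).
  { intros t. unfold F, h.
    assert (H1 : derivable_pt_lim (fun t => t / V) t (/ V)).
    { eapply dlim_eq. apply (derivable_pt_lim_div (fun t => t) (fun _ => V)). apply derivable_pt_lim_id.
      apply derivable_pt_lim_const. lra. cbv beta. unfold Rsqr. field. lra. }
    pose proof (derivable_pt_lim_comp (fun t => t / V) atan t _ _ H1 (derivable_pt_lim_atan (t / V))) as H2.
    eapply dlim_eq. apply dscal. exact H2. cbv beta.
    replace (1 + (t / V) ^ 2) with ((V * V + t * t) / (V * V)) by (field; lra).
    specialize (Hpos t). field. split; lra. }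
  assert (HRh : RInt h a b = F b - F a).
  { apply is_RInt_unique. apply (is_RInt_derive F h).
    intros t _. apply is_derive_Reals. apply HF. intros t _. apply cpt_cont. auto. }
  pose proof (abs_RInt_le g a b Hab Hgi) as H1.
  assert (H2 : RInt (fun t => Rabs (g t)) a b <= RInt h a b).
  { apply RInt_le; auto. intros t Ht. apply Hb. lra. }
  assert (H3 : F b - F a <= k * (32 * C * PI / V)).
  { unfold F. pose proof (atan_bound (b / V)). pose proof (atan_bound (a / V)).
    assert (0 <= k * (32 * C / V)) by (apply Rmult_le_pos; auto; apply Rle_mult_inv_pos; lra).
    replace (k * (32 * C * PI / V)) with (k * (32 * C / V) * PI) by (field; lra).
    rewrite <- Rmult_minus_distr_l. apply Rmult_le_compat_l; auto. lra. }
  lra.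
Qed.

Lemma impr_unique f l1 l2 : improper_integral f l1 -> improper_integral f l2 -> l1 = l2.
Proof.
  intros H1 H2. destruct (Req_dec l1 l2) as [|Hne]; auto. exfalso.
  set (e := Rabs (l1 - l2) / 2).
  assert (He : e > 0) by (unfold e; assert (0 < Rabs (l1 - l2)) by (apply Rabs_pos_lt; lra); lra).
  destruct (H1 e He) as [M1 HM1]. destruct (H2 e He) as [M2 HM2].
  set (b := Rabs M1 + Rabs M2 + 1).
  pose proof (Rabs_le_between M1 (Rabs M1) (Rle_refl _)).
  pose proof (Rabs_le_between M2 (Rabs M2) (Rle_refl _)).
  assert (Hb1 : - b <= - M1 /\ M1 <= b) by (unfold b; lra).
  assert (Hb2 : - b <= - M2 /\ M2 <= b) by (unfold b; lra).
  destruct (HM1 (-b) b ltac:(lra) ltac:(lra)) as [p1 Hp1].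
  destruct (HM2 (-b) b ltac:(lra) ltac:(lra)) as [p2 Hp2].
  rewrite (RiemannInt_P5 p1 p2) in Hp1.
  assert (Rabs (l1 - l2) <= Rabs (RiemannInt p2 - l2) + Rabs (RiemannInt p2 - l1)).
  { replace (l1 - l2) with ((RiemannInt p2 - l2) - (RiemannInt p2 - l1)) by ring.
    eapply Rle_trans; [apply Rabs_triang|]. rewrite Rabs_Ropp. lra. }
  unfold e in *. lra.
Qed.

Lemma impr_RInt f l : improper_integral f l -> forall eps, eps > 0 ->
  exists M, 0 < M /\ forall a b, a <= - M -> M <= b -> ex_RInt f a b /\ Rabs (RInt f a b - l) < eps.
Proof.
  intros H eps He. destruct (H eps He) as [M HM]. exists (Rabs M + 1). split.
  pose proof (Rabs_pos M); lra.
  intros a b Ha Hb. pose proof (Rabs_le_between M (Rabs M) (Rle_refl _)).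
  destruct (HM a b ltac:(lra) ltac:(lra)) as [pr Hpr].
  split. apply ex_RInt_Reals_1. exact pr. rewrite (RInt_Reals f a b pr). exact Hpr.
Qed.

Lemma decay_inv mu' C gamma : gamma > 1 -> C > 0 ->
  (forall y, Rabs (mu' y) <= C / (1 + abs_rpow y gamma)) ->
  forall y, 1 <= y -> Rabs (mu' y) <= C / y.
Proof.
  intros Hg HC H y Hy. eapply Rle_trans; [apply H|].
  unfold abs_rpow. destruct (Req_EM_T y 0) as [E|E]; [lra|].
  rewrite Rabs_right by lra.
  assert (Rpower y 1 <= Rpower y gamma) by (apply Rle_Rpower; lra).
  rewrite Rpower_1 in H0 by lra.
  apply div_le; try lra. nra.
Qed.

Lemma Kest mu' C m Mx : C > 0 -> (forall y, continuity_pt mu' y) ->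
  (forall y, 1 <= y -> Rabs (mu' y) <= C / y) -> m <= Mx ->
  forall eps, eps > 0 -> exists V d, 0 < V /\ 0 < d /\ 32 * C * PI / V <= eps /\
    forall c s v, m <= c <= Mx -> m <= s <= Mx -> Rabs (s - c) < d ->
      Rabs (mu' (v ^ 2 / 2 + s) - mu' (v ^ 2 / 2 + c)) <= 32 * C / (V * V + v * v).
Proof.
  intros HC Hc Hdec Hm eps He.
  pose proof PI_RGT_0 as Hpi.
  set (V := 2 + 2 * Rabs m + 32 * C * PI / eps).
  assert (H0 : 0 <= 32 * C * PI / eps) by (apply Rle_mult_inv_pos; [|lra]; apply Rmult_le_pos; lra).
  assert (HV : 2 + 2 * Rabs m <= V) by (unfold V; lra).
  pose proof (Rabs_pos m) as Hm0.
  pose proof (Rabs_le_between m (Rabs m) (Rle_refl _)) as Hmm.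
  assert (HV0 : 0 < V) by lra.
  set (e0 := 16 * C / (V * V)).
  assert (He0 : 0 < e0) by (unfold e0; apply Rdiv_lt_0_compat; nra).
  destruct (@Heine_cor2 mu' m (V * V / 2 + Mx) (fun x _ => Hc x) (mkposreal e0 He0)) as [d Hu]. destruct d as [d Hd].
  exists V, d. split; [lra|]. split; [lra|]. split.
  { apply Rmult_le_reg_r with V; [lra|]. unfold Rdiv at 1. rewrite Rmult_assoc, Rinv_l, Rmult_1_r by lra.
    rewrite Rmult_comm. unfold V.
    assert (E : eps * (2 + 2 * Rabs m + 32 * C * PI / eps) = eps * (2 + 2 * Rabs m) + 32 * C * PI) by (field; lra).
    rewrite E. assert (0 <= eps * (2 + 2 * Rabs m)) by (apply Rmult_le_pos; lra). lra. }
  intros c s v Hc1 Hs1 Hsc.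
  assert (Hvv : 0 <= v * v) by nra.
  assert (Hpos : 0 < V * V + v * v) by nra.
  replace (v ^ 2) with (v * v) by ring.
  destruct (Rlt_or_le (v * v) (V * V)) as [Hsm|Hbg].
  - simpl in Hu. assert (Hlt : Rabs (mu' (v * v / 2 + s) - mu' (v * v / 2 + c)) < e0).
    { apply Hu; try lra. replace (v * v / 2 + s - (v * v / 2 + c)) with (s - c) by ring. exact Hsc. }
    apply Rlt_le. eapply Rlt_le_trans; [exact Hlt|]. unfold e0.
    apply div_le; try nra.
  - assert (Hy : forall t, m <= t -> 1 <= v * v / 2 + t /\ v * v / 4 <= v * v / 2 + t).
    { intros t Ht. assert (V * V >= 4 + 8 * Rabs m) by nra. split; lra. }
    assert (Hb : forall t, m <= t -> Rabs (mu' (v * v / 2 + t)) <= 4 * C / (v * v)).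
    { intros t Ht. destruct (Hy t Ht) as [H1 H2]. eapply Rle_trans. apply Hdec; auto.
      apply div_le; nra. }
    eapply Rle_trans. unfold Rminus. apply Rabs_triang. rewrite Rabs_Ropp.
    pose proof (Hb s (proj1 Hs1)). pose proof (Hb c (proj1 Hc1)).
    assert (8 * C / (v * v) <= 32 * C / (V * V + v * v)) by (apply div_le; nra).
    assert (4 * C / (v * v) + 4 * C / (v * v) = 8 * C / (v * v)) by (field; nra).
    lra.
Qed.

Lemma RInt_sub f g a b : ex_RInt f a b -> ex_RInt g a b ->
  RInt (fun v => f v - g v) a b = RInt f a b - RInt g a b.
Proof. intros H1 H2. exact (RInt_minus f g a b H1 H2). Qed.

Lemma ex_RInt_sub f g a b : ex_RInt f a b -> ex_RInt g a b -> ex_RInt (fun v => f v - g v) a b.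
Proof. intros H1 H2. exact (ex_RInt_minus f g a b H1 H2). Qed.

Lemma RInt_sc k f a b : ex_RInt f a b -> RInt (fun v => k * f v) a b = k * RInt f a b.
Proof. intros H. exact (RInt_scal f a b k H). Qed.

Lemma ex_RInt_sc k f a b : ex_RInt f a b -> ex_RInt (fun v => k * f v) a b.
Proof. intros H. exact (ex_RInt_scal f a b k H). Qed.

Lemma cont_sh f c : (forall y, continuity_pt f y) -> forall v, continuity_pt (fun v => f (v ^ 2 / 2 + c)) v.
Proof.
  intros Hf v. apply (continuity_pt_comp (fun v => v ^ 2 / 2 + c) f); auto.
  apply (dlim_cont _ v v). apply is_derive_Reals. auto_derive; auto. field.
Qed.

Lemma q_cont mu' phi q C m Mx : C > 0 -> (forall y, continuity_pt mu' y) ->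
  (forall y, 1 <= y -> Rabs (mu' y) <= C / y) -> m <= Mx -> (forall x, m <= phi x <= Mx) ->
  (forall x, continuity_pt phi x) ->
  (forall x, improper_integral (fun v => mu' (v ^ 2 / 2 + phi x)) (q x)) ->
  forall x, continuity_pt q x.
Proof.
  intros HC Hc Hdec Hm Hr Hphic Hq x eps Heps.
  destruct (Kest mu' C m Mx HC Hc Hdec Hm (eps / 2) ltac:(lra)) as [V [d [HV [Hd [Hle Hpt]]]]].
  destruct (Hphic x d Hd) as [alp [Halp Hphix]].
  exists alp. split; auto. intros y [Hdy Hyx]. simpl in Hyx, Hphix |- *. unfold R_dist in Hyx, Hphix |- *.
  assert (Hpd : Rabs (phi y - phi x) < d) by (apply Hphix; split; auto).
  apply Rle_lt_trans with (eps / 2); [|lra].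
  apply le_eps. intros eta Heta.
  destruct (impr_RInt _ _ (Hq y) (eta / 2) ltac:(lra)) as [My [HMy HMy2]].
  destruct (impr_RInt _ _ (Hq x) (eta / 2) ltac:(lra)) as [Mx' [HMx HMx2]].
  set (b0 := My + Mx').
  destruct (HMy2 (- b0) b0 ltac:(unfold b0; lra) ltac:(unfold b0; lra)) as [Ey Ay].
  destruct (HMx2 (- b0) b0 ltac:(unfold b0; lra) ltac:(unfold b0; lra)) as [Ex Ax].
  assert (HI : Rabs (RInt (fun v => mu' (v ^ 2 / 2 + phi y) - mu' (v ^ 2 / 2 + phi x)) (- b0) b0) <= 1 * (32 * C * PI / V)).
  { apply int_bound; try lra. unfold b0; lra.
    intros v. apply continuity_pt_minus; apply cont_sh; auto.
    intros v _. rewrite Rmult_1_l. apply Hpt; auto. }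
  rewrite RInt_sub in HI by auto.
  set (Iy := RInt (fun v => mu' (v ^ 2 / 2 + phi y)) (- b0) b0) in *.
  set (Ix := RInt (fun v => mu' (v ^ 2 / 2 + phi x)) (- b0) b0) in *.
  apply Rabs_lt_between in Ay. apply Rabs_lt_between in Ax. apply Rabs_le_between in HI.
  apply Rabs_def1; lra.
Qed.

Lemma mvt_gen mu mu' : (forall y, derivable_pt_lim mu y (mu' y)) -> forall y1 y2,
  exists xi, Rmin y1 y2 <= xi <= Rmax y1 y2 /\ mu y2 - mu y1 = mu' xi * (y2 - y1).
Proof.
  intros H y1 y2. destruct (Rtotal_order y1 y2) as [Hl|[He|Hg]].
  - destruct (MVT_cor2 mu mu' y1 y2 Hl (fun c _ => H c)) as [xi [E Hx]].
    exists xi. rewrite Rmin_left, Rmax_right by lra. split; [lra|auto].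
  - subst. exists y2. rewrite Rmin_left, Rmax_left by lra. split; [lra|ring].
  - destruct (MVT_cor2 mu mu' y2 y1 Hg (fun c _ => H c)) as [xi [E Hx]].
    exists xi. rewrite Rmin_right, Rmax_left by lra. split; [lra|]. 
    replace (mu y2 - mu y1) with (- (mu y1 - mu y2)) by ring. rewrite E. ring.
Qed.

Lemma dd_est (mu mu' phi ddphi q : R -> R) (C m Mx : R) : C > 0 -> (forall y, continuity_pt mu' y) ->
  (forall y, 1 <= y -> Rabs (mu' y) <= C / y) -> m <= Mx -> (forall x, m <= phi x <= Mx) ->
  (forall y, derivable_pt_lim mu y (mu' y)) ->
  (forall x, improper_integral (fun v => mu (v ^ 2 / 2 + phi x)) (1 - ddphi x)) ->
  (forall x, improper_integral (fun v => mu' (v ^ 2 / 2 + phi x)) (q x)) ->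
  forall eps, eps > 0 -> exists d, d > 0 /\ forall x y, Rabs (phi y - phi x) < d ->
    Rabs (ddphi x - ddphi y - (phi y - phi x) * q x) <= eps * Rabs (phi y - phi x).
Proof.
  intros HC Hc Hdec Hm Hr Hmu Hode Hq eps Heps.
  destruct (Kest mu' C m Mx HC Hc Hdec Hm eps Heps) as [V [d [HV [Hd [Hle Hpt]]]]].
  exists d. split; auto. intros x y Hxy.
  set (c := phi x) in *. set (dd := phi y) in *.
  assert (Hmuc : forall y, continuity_pt mu y) by (intros; eapply dlim_cont; eauto).
  apply le_eps. intros eta Heta.
  set (e3 := eta / (3 * (1 + Rabs (dd - c)))).
  assert (He3 : 0 < e3) by (unfold e3; apply Rdiv_lt_0_compat; [lra|]; pose proof (Rabs_pos (dd - c)); lra).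
  destruct (impr_RInt _ _ (Hode y) e3 He3) as [M1 [HM1 A1]].
  destruct (impr_RInt _ _ (Hode x) e3 He3) as [M2 [HM2 A2]].
  destruct (impr_RInt _ _ (Hq x) e3 He3) as [M3 [HM3 A3]].
  set (b0 := M1 + M2 + M3).
  destruct (A1 (- b0) b0 ltac:(unfold b0; lra) ltac:(unfold b0; lra)) as [E1 B1].
  destruct (A2 (- b0) b0 ltac:(unfold b0; lra) ltac:(unfold b0; lra)) as [E2 B2].
  destruct (A3 (- b0) b0 ltac:(unfold b0; lra) ltac:(unfold b0; lra)) as [E3 B3].
  fold dd in B1, E1. fold c in B2, E2, B3, E3.
  set (g := fun v => mu (v ^ 2 / 2 + dd) - mu (v ^ 2 / 2 + c) - (dd - c) * mu' (v ^ 2 / 2 + c)).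
  assert (HI : Rabs (RInt g (- b0) b0) <= Rabs (dd - c) * (32 * C * PI / V)).
  { apply int_bound; try lra. apply Rabs_pos. unfold b0; lra.
    intros v. unfold g. apply continuity_pt_minus. apply continuity_pt_minus; apply cont_sh; auto.
    apply continuity_pt_scal. apply cont_sh; auto.
    intros v _. unfold g.
    destruct (mvt_gen mu mu' Hmu (v ^ 2 / 2 + c) (v ^ 2 / 2 + dd)) as [xi [Hxi Exi]].
    rewrite Exi. set (s := xi - v ^ 2 / 2).
    replace xi with (v ^ 2 / 2 + s) by (unfold s; ring).
    replace (mu' (v ^ 2 / 2 + s) * (v ^ 2 / 2 + dd - (v ^ 2 / 2 + c)) - (dd - c) * mu' (v ^ 2 / 2 + c))
      with ((dd - c) * (mu' (v ^ 2 / 2 + s) - mu' (v ^ 2 / 2 + c))) by ring.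
    rewrite Rabs_mult. apply Rmult_le_compat_l. apply Rabs_pos.
    assert (Hs : Rmin c dd <= s <= Rmax c dd).
    { unfold s. unfold Rmin, Rmax in *. destruct (Rle_dec (v ^ 2 / 2 + c) (v ^ 2 / 2 + dd));
      destruct (Rle_dec c dd); lra. }
    apply Hpt.
    - unfold c; apply Hr.
    - pose proof (Hr x). pose proof (Hr y). fold c dd in H, H0. unfold Rmin, Rmax in Hs.
      destruct (Rle_dec c dd); lra.
    - eapply Rle_lt_trans; [|exact Hxy]. fold c dd.
      unfold Rmin, Rmax in Hs. destruct (Rle_dec c dd).
      + rewrite !Rabs_right by lra. lra.
      + rewrite Rabs_left1 by lra. rewrite (Rabs_left1 (dd - c)) by lra. lra. }
  assert (HRg : RInt g (- b0) b0 = RInt (fun v => mu (v ^ 2 / 2 + dd)) (- b0) b0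
      - RInt (fun v => mu (v ^ 2 / 2 + c)) (- b0) b0 - (dd - c) * RInt (fun v => mu' (v ^ 2 / 2 + c)) (- b0) b0).
  { unfold g. rewrite RInt_sub. rewrite RInt_sub by auto. rewrite RInt_sc by auto. reflexivity.
    apply ex_RInt_sub; auto. apply ex_RInt_sc; auto. }
  rewrite HRg in HI.
  set (I1 := RInt (fun v => mu (v ^ 2 / 2 + dd)) (- b0) b0) in *.
  set (I2 := RInt (fun v => mu (v ^ 2 / 2 + c)) (- b0) b0) in *.
  set (I3 := RInt (fun v => mu' (v ^ 2 / 2 + c)) (- b0) b0) in *.
  assert (Hk : Rabs (dd - c) * (32 * C * PI / V) <= eps * Rabs (dd - c)).
  { rewrite Rmult_comm. apply Rmult_le_compat_r; auto. apply Rabs_pos. }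
  assert (H3 : Rabs ((dd - c) * (I3 - q x)) <= Rabs (dd - c) * e3).
  { rewrite Rabs_mult. apply Rmult_le_compat_l. apply Rabs_pos. lra. }
  assert (H3' : Rabs (dd - c) * e3 <= eta / 3).
  { unfold e3. pose proof (Rabs_pos (dd - c)).
    replace (Rabs (dd - c) * (eta / (3 * (1 + Rabs (dd - c))))) with ((eta / 3) * (Rabs (dd - c) / (1 + Rabs (dd - c)))) by (field; lra).
    assert (Rabs (dd - c) / (1 + Rabs (dd - c)) <= 1).
    { apply Rmult_le_reg_r with (1 + Rabs (dd - c)); [lra|]. unfold Rdiv.
      rewrite Rmult_assoc, Rinv_l, Rmult_1_r by lra. lra. }
    assert (0 <= Rabs (dd - c) / (1 + Rabs (dd - c))) by (apply Rle_mult_inv_pos; lra).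
    nra. }
  assert (He3' : e3 <= eta / 3).
  { unfold e3. pose proof (Rabs_pos (dd - c)). apply div_le; nra. }
  apply Rabs_lt_between in B1. apply Rabs_lt_between in B2. apply Rabs_le_between in H3.
  apply Rabs_le_between in HI.
  apply Rabs_def1; lra.
Qed.

Lemma ddphi_der (phi dphi ddphi q : R -> R) :
  (forall x, derivable_pt_lim phi x (dphi x)) ->
  (forall eps, eps > 0 -> exists d, d > 0 /\ forall x y, Rabs (phi y - phi x) < d ->
    Rabs (ddphi x - ddphi y - (phi y - phi x) * q x) <= eps * Rabs (phi y - phi x)) ->
  forall x, derivable_pt_lim ddphi x (- (q x * dphi x)).
Proof.
  intros Hphi Hest x eps Heps.
  set (A := Rabs (q x) + 1). set (B := Rabs (dphi x) + 1).
  assert (HA : 0 < A) by (unfold A; pose proof (Rabs_pos (q x)); lra).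
  assert (HB : 0 < B) by (unfold B; pose proof (Rabs_pos (dphi x)); lra).
  set (e2 := Rmin 1 (eps / (2 * A))).
  assert (He2 : 0 < e2) by (unfold e2; apply Rmin_pos; [lra| apply Rdiv_lt_0_compat; lra]).
  set (e1 := eps / (2 * (B + 1))).
  assert (He1 : 0 < e1) by (unfold e1; apply Rdiv_lt_0_compat; lra).
  destruct (Hest e1 He1) as [d [Hd Hd2]].
  destruct (dlim_cont phi x (dphi x) (Hphi x) d Hd) as [al1 [Hal1 Hc1]].
  destruct (Hphi x e2 He2) as [[al2 Hal2] Hc2]. simpl in Hc2.
  assert (Hmin : 0 < Rmin al1 al2) by (apply Rmin_pos; lra).
  exists (mkposreal _ Hmin). simpl. intros h Hh0 Hh.
  assert (Hh1 : Rabs h < al1) by (eapply Rlt_le_trans; [exact Hh| apply Rmin_l]).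
  assert (Hh2 : Rabs h < al2) by (eapply Rlt_le_trans; [exact Hh| apply Rmin_r]).
  assert (Hpd : Rabs (phi (x + h) - phi x) < d).
  { specialize (Hc1 (x + h)). simpl in Hc1. unfold R_dist in Hc1. apply Hc1. split.
    split; [exact I| intro E; apply Hh0; lra]. replace (x + h - x) with h by ring. auto. }
  specialize (Hd2 x (x + h) Hpd). specialize (Hc2 h Hh0 Hh2).
  set (D := phi (x + h) - phi x) in *.
  assert (HhD : Rabs (D / h) <= B).
  { apply Rabs_lt_between in Hc2. assert (e2 <= 1) by (unfold e2; apply Rmin_l).
    pose proof (Rabs_le_between (dphi x) (Rabs (dphi x)) (Rle_refl _)). apply Rabs_le. unfold B. lra. }
  assert (Eq : (ddphi (x + h) - ddphi x) / h - - (q x * dphi x) =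
     - ((ddphi x - ddphi (x + h) - D * q x) / h) - q x * (D / h - dphi x)).
  { field. auto. }
  rewrite Eq.
  assert (T1 : Rabs ((ddphi x - ddphi (x + h) - D * q x) / h) <= e1 * B).
  { unfold Rdiv. rewrite Rabs_mult. rewrite Rabs_Rinv by auto.
    assert (Rabs (D / h) = Rabs D * / Rabs h) by (unfold Rdiv; rewrite Rabs_mult, Rabs_Rinv; auto).
    assert (0 < / Rabs h) by (apply Rinv_0_lt_compat; apply Rabs_pos_lt; auto).
    apply Rle_trans with (e1 * Rabs D * / Rabs h). apply Rmult_le_compat_r; lra.
    rewrite Rmult_assoc, <- H. apply Rmult_le_compat_l; lra. }
  assert (T2 : Rabs (q x * (D / h - dphi x)) <= Rabs (q x) * e2).
  { rewrite Rabs_mult. apply Rmult_le_compat_l. apply Rabs_pos. lra. }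
  assert (T3 : e1 * B < eps / 2).
  { unfold e1. replace (eps / (2 * (B + 1)) * B) with (eps / 2 * (B / (B + 1))) by (field; lra).
    assert (B / (B + 1) < 1).
    { apply Rmult_lt_reg_r with (B + 1); [lra|]. unfold Rdiv. rewrite Rmult_assoc, Rinv_l, Rmult_1_r by lra. lra. }
    nra. }
  assert (T4 : Rabs (q x) * e2 < eps / 2).
  { assert (e2 <= eps / (2 * A)) by (unfold e2; apply Rmin_r).
    pose proof (Rabs_pos (q x)).
    apply Rle_lt_trans with (Rabs (q x) * (eps / (2 * A))). apply Rmult_le_compat_l; lra.
    replace (Rabs (q x) * (eps / (2 * A))) with (eps / 2 * (Rabs (q x) / A)) by (field; lra).
    assert (Rabs (q x) / A < 1).
    { assert (Rabs (q x) / A = 1 - 1 / A) by (unfold A; field; lra).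
      assert (0 < 1 / A) by (apply Rdiv_lt_0_compat; lra). lra. }
    nra. }
  set (X := (ddphi x - ddphi (x + h) - D * q x) / h) in *. set (Y := q x * (D / h - dphi x)) in *.
  replace (- X - Y) with (- X + - Y) by ring.
  eapply Rle_lt_trans; [apply Rabs_triang|]. rewrite !Rabs_Ropp. lra.
Qed.

Lemma sol_sub Q a b a' b' u du : sol Q a b u du -> a <= a' -> b' <= b -> sol Q a' b' u du.
Proof. intros H H1 H2 x Hx. apply H. lra. Qed.

Lemma sol_lin Q a b u du v dv c : sol Q a b u du -> sol Q a b v dv ->
  sol Q a b (fun x => u x - c * v x) (fun x => du x - c * dv x).
Proof.
  intros Hu Hv x Hx. destruct (Hu x Hx), (Hv x Hx). split.
  - apply dminus; auto. apply dscal; auto.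
  - eapply dlim_eq. apply dminus; [eauto| apply dscal; eauto]. ring.
Qed.

Lemma sol_ext Q Q' a b u du : sol Q a b u du -> (forall x, a <= x <= b -> Q x = Q' x) -> sol Q' a b u du.
Proof. intros H HQ x Hx. destruct (H x Hx). split; auto. rewrite <- HQ; auto. Qed.

Lemma eig_sol q P lam u du : SL_eigenpair q P lam u du ->
  sol (fun x => q x + lam) 0 P u du /\ u 0 = 0 /\ u P = 0 /\ (exists x, 0 <= x <= P /\ u x <> 0).
Proof.
  intros [[ddu Hd] [H0 [HP Hx]]]. split; auto. intros x Hx'. destruct (Hd x Hx') as [A [B E]].
  split; auto. eapply dlim_eq; eauto. lra.
Qed.

Lemma sq_lt x e : 0 < e -> x * x < e * e -> Rabs x < e.
Proof. intros He H. unfold Rabs. destruct (Rcase_abs x); nra. Qed.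

Lemma cont_pos_near f x : continuity_pt f x -> 0 < f x ->
  exists al, al > 0 /\ forall y, Rabs (y - x) < al -> 0 < f y.
Proof.
  intros Hc Hp. destruct (Hc (f x) Hp) as [al [Hal H]].
  exists al. split; auto. intros y Hy.
  destruct (Req_dec y x) as [->|Hyx]; auto.
  specialize (H y). simpl in H. unfold R_dist, D_x, no_cond in H.
  assert (Rabs (f y - f x) < f x) by (apply H; split; [split; auto | auto]).
  apply Rabs_lt_between in H0. lra.
Qed.

Lemma eig_end q P lam u du : P > 0 -> (forall x, continuity_pt q x) -> SL_eigenpair q P lam u du ->
  du 0 <> 0 /\ du P <> 0.
Proof.
  intros HP Hq He. destruct (eig_sol q P lam u du He) as [Hs [H0 [H1 [x [Hx Hux]]]]].
  assert (HQ : forall x, 0 <= x <= P -> continuity_pt (fun x => q x + lam) x).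
  { intros y _. apply continuity_pt_plus; auto. apply continuity_pt_const; intros a b; reflexivity. }
  split; intro E; apply Hux.
  - apply (sol_unique _ 0 P u du 0 HQ Hs); auto. lra.
  - apply (sol_unique _ 0 P u du P HQ Hs); auto. lra.
Qed.


Lemma noint q P dphi ddphi lam u du : P > 0 -> (forall x, continuity_pt q x) ->
  sol q 0 P dphi ddphi -> (forall x, 0 < x < P -> dphi x = 0 -> x = P / 2) ->
  lam < 0 -> SL_eigenpair q P lam u du -> forall x, 0 < x < P -> u x <> 0.
Proof.
  intros HP Hq Hsd Hdz Hl He z Hz Euz.
  destruct (eig_sol q P lam u du He) as [Hs [H0 [H1 _]]].
  destruct (eig_end q P lam u du HP Hq He) as [Hd0 HdP].
  assert (Hcu : forall x, 0 <= x <= P -> continuity_pt u x) by (apply sol_cont_u with (Q := fun x => q x + lam) (du := du); auto).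
  destruct (deriv_nz_near u 0 (du 0) (proj1 (Hs 0 ltac:(lra))) H0 Hd0) as [e0 [He0 [Hr0 _]]].
  destruct (deriv_nz_near u P (du P) (proj1 (Hs P ltac:(lra))) H1 HdP) as [e1 [He1 [_ Hl1]]].
  assert (C1 : forall x, 0 <= x <= z -> continuity_pt u x) by (intros x Hx; apply Hcu; lra).
  assert (C2 : forall x, z <= x <= P -> continuity_pt u x) by (intros x Hx; apply Hcu; lra).
  assert (R0 : forall x, 0 < x < 0 + e0 -> u x <> 0) by (intros x Hx; apply Hr0; lra).
  destruct (first_zero u 0 z e0 ltac:(lra) C1 Euz He0 R0) as [z1 [Hz1 [Ez1 Hnz1]]].
  destruct (last_zero u z P e1 ltac:(lra) C2 Euz He1 Hl1) as [z2 [Hz2 [Ez2 Hnz2]]].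
  destruct (sturm (fun x => q x + lam) q 0 z1 u du dphi ddphi ltac:(lra)) as [w1 [Hw1 Ew1]]; auto.
  { apply (sol_sub _ 0 P); auto; lra. }
  { apply (sol_sub _ 0 P); auto; lra. }
  { intros; lra. }
  destruct (sturm (fun x => q x + lam) q z2 P u du dphi ddphi ltac:(lra)) as [w2 [Hw2 Ew2]]; auto.
  { apply (sol_sub _ 0 P); auto; lra. }
  { apply (sol_sub _ 0 P); auto; lra. }
  { intros; lra. }
  apply Hdz in Ew1; [|lra]. apply Hdz in Ew2; [|lra]. lra.
Qed.

Lemma neg_unique q P lam1 lam2 u1 du1 u2 du2 : P > 0 -> (forall x, continuity_pt q x) ->
  SL_eigenpair q P lam1 u1 du1 -> SL_eigenpair q P lam2 u2 du2 ->
  (forall x, 0 < x < P -> u1 x <> 0) -> (forall x, 0 < x < P -> u2 x <> 0) -> lam1 = lam2.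
Proof.
  intros HP Hq E1 E2 N1 N2.
  destruct (eig_sol _ _ _ _ _ E1) as [S1 [A1 [B1 _]]].
  destruct (eig_sol _ _ _ _ _ E2) as [S2 [A2 [B2 _]]].
  destruct (Rtotal_order lam1 lam2) as [Hlt|[|Hgt]]; auto; exfalso.
  - destruct (sturm (fun x => q x + lam1) (fun x => q x + lam2) 0 P u1 du1 u2 du2) as [w [Hw Ew]]; auto; try lra.
    intros; lra. apply (N2 w); auto.
  - destruct (sturm (fun x => q x + lam2) (fun x => q x + lam1) 0 P u2 du2 u1 du1) as [w [Hw Ew]]; auto; try lra.
    intros; lra. apply (N1 w); auto.
Qed.

Lemma eig_sym q P lam u du : P > 0 -> (forall x, continuity_pt q x) ->
  (forall x, 0 <= x <= P -> q (P - x) = q x) -> SL_eigenpair q P lam u du ->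
  u (P / 2) <> 0 ->
  forall x, 0 <= x <= P -> u x = u (P - x) /\ du (P - x) = - du x /\ u (P - x) * du (P - x) = - (u x * du x).
Proof.
  intros HP Hq Hqs He Hmid.
  destruct (eig_sol _ _ _ _ _ He) as [S [A [B _]]].
  destruct (eig_end q P lam u du HP Hq He) as [Hd0 HdP].
  set (w := fun x => u (P - x)). set (dw := fun x => - du (P - x)).
  assert (Sw : sol (fun x => q x + lam) 0 P w dw).
  { intros x Hx. destruct (S (P - x) ltac:(lra)) as [D1 D2].
    assert (Hl : derivable_pt_lim (fun x => P - x) x (-1)).
    { eapply dlim_eq. apply dminus. apply dconst. apply derivable_pt_lim_id. ring. }
    split.
    - unfold w, dw. eapply dlim_eq. apply (derivable_pt_lim_comp (fun x => P - x) u x _ _ Hl D1). ring.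
    - unfold w, dw. eapply dlim_eq. apply derivable_pt_lim_opp.
      apply (derivable_pt_lim_comp (fun x => P - x) du x _ _ Hl D2).
      rewrite Hqs by lra. ring. }
  set (c := dw 0 / du 0).
  assert (HQ : forall x, 0 <= x <= P -> continuity_pt (fun x => q x + lam) x).
  { intros y _. apply continuity_pt_plus; auto. apply continuity_pt_const; intros a b; reflexivity. }
  assert (Z := sol_unique _ 0 P _ _ 0 HQ (sol_lin _ 0 P w dw u du c Sw S) ltac:(lra)).
  assert (Z0 : w 0 - c * u 0 = 0) by (unfold w; rewrite Rminus_0_r, A, B; ring).
  assert (Z1 : dw 0 - c * du 0 = 0) by (unfold c; field; auto).
  specialize (Z Z0 Z1).
  assert (Hc : c = 1).
  { destruct (Z (P / 2) ltac:(lra)) as [E _]. unfold w in E.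
    replace (P - P / 2) with (P / 2) in E by field.
    apply (Rmult_eq_reg_r (u (P / 2))); auto. lra. }
  intros x Hx. destruct (Z x Hx) as [E1 E2]. rewrite Hc in E1, E2. unfold w, dw in E1, E2.
  split; [lra|]. split; [lra|].
  replace (u (P - x)) with (u x) by lra. replace (du (P - x)) with (- du x) by lra. ring.
Qed.

Definition Sol (q : R -> R) (P lam : R) (u du : R -> R) : Prop :=
  sol (fun x => q x + lam) 0 P u du /\ u 0 = 0 /\ du 0 = 1.

Lemma Sol_exists q P lam : P > 0 -> (forall x, continuity_pt q x) -> exists u du, Sol q P lam u du.
Proof.
  intros HP Hq.
  destruct (ode_exists (fun x => q x + lam) 0 0 1 (P + 1)) as [u [du [H0 [H1 H]]]]; try lra.
  intros x. apply continuity_pt_plus; auto. apply continuity_pt_const; intros a b; reflexivity.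
  exists u, du. split; [|split; auto]. intros x Hx. apply H. rewrite Rminus_0_r. apply Rabs_def1; lra.
Qed.

Lemma Sol_close q P lam1 u1 du1 : P > 0 -> (forall x, continuity_pt q x) -> Sol q P lam1 u1 du1 ->
  forall eps, 0 < eps -> exists d, 0 < d /\ forall lam2 u2 du2, Rabs (lam2 - lam1) < d -> Sol q P lam2 u2 du2 ->
  forall x, 0 <= x <= P -> Rabs (u2 x - u1 x) < eps /\ Rabs (du2 x - du1 x) < eps.
Proof.
  intros HP Hq [S1 [A1 B1]] eps He.
  destruct (bound_on q 0 P ltac:(lra) (fun x _ => Hq x)) as [Mq [HMq HMqb]].
  destruct (bound_on u1 0 P ltac:(lra) (sol_cont_u _ _ _ _ _ S1)) as [B [HB HBb]].
  set (K0 := Mq + Rabs lam1 + 1).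
  set (Kc := B * B * exp ((K0 + 3) * (P - 0))).
  assert (HKc : 0 <= Kc) by (unfold Kc; apply Rmult_le_pos; [nra| left; apply exp_pos]).
  set (d := Rmin 1 (eps * eps / (Kc + 1))).
  assert (Hd : 0 < d) by (unfold d; apply Rmin_pos; [lra| apply Rdiv_lt_0_compat; nra]).
  exists d. split; auto. intros lam2 u2 du2 Hl [S2 [A2 B2]] x Hx.
  assert (Hd1 : d <= 1) by apply Rmin_l.
  assert (Hd2 : d <= eps * eps / (Kc + 1)) by apply Rmin_r.
  assert (HK0 : 0 <= K0) by (unfold K0; pose proof (Rabs_pos lam1); lra).
  pose proof (sol_close (fun x => q x + lam2) (fun x => q x + lam1) 0 P u2 du2 u1 du1 K0 B (Rabs (lam2 - lam1))
    ltac:(lra) S2 S1 ltac:(rewrite A1, A2; auto) ltac:(rewrite B1, B2; auto) HK0) as H.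
  assert (H' : (u2 x - u1 x) * (u2 x - u1 x) + (du2 x - du1 x) * (du2 x - du1 x) <= Rabs (lam2 - lam1) * (B * B) * exp ((K0 + 3) * (P - 0))).
  { apply H; auto.
    - intros y Hy. specialize (HMqb y Hy). unfold K0.
      eapply Rle_trans; [apply Rabs_triang|].
      assert (Rabs lam2 <= Rabs lam1 + 1).
      { pose proof (Rabs_triang lam1 (lam2 - lam1)) as T. replace (lam1 + (lam2 - lam1)) with lam2 in T by ring. lra. }
      lra.
    - apply Rabs_pos.
    - lra.
    - intros y Hy. replace (q y + lam2 - (q y + lam1)) with (lam2 - lam1) by ring. lra. }
  assert (Hsm : Rabs (lam2 - lam1) * (B * B) * exp ((K0 + 3) * (P - 0)) < eps * eps).
  { rewrite Rmult_assoc. fold Kc. pose proof (Rabs_pos (lam2 - lam1)).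
    apply Rle_lt_trans with (eps * eps / (Kc + 1) * Kc). apply Rmult_le_compat_r; lra.
    replace (eps * eps / (Kc + 1) * Kc) with (eps * eps - eps * eps / (Kc + 1)) by (field; lra).
    assert (0 < eps * eps / (Kc + 1)) by (apply Rdiv_lt_0_compat; nra). lra. }
  assert (0 <= (u2 x - u1 x) * (u2 x - u1 x)) by apply Rle_0_sqr.
  assert (0 <= (du2 x - du1 x) * (du2 x - du1 x)) by apply Rle_0_sqr.
  split; apply sq_lt; lra.
Qed.

Lemma Sol_low q P lam u du : P > 0 -> Sol q P lam u du -> (forall x, 0 <= x <= P -> q x + lam < 0) ->
  forall x, 0 < x < P -> 0 <= u x.
Proof.
  intros HP [S [A B]] Hneg x1 Hx1.
  destruct (Rle_or_lt 0 (u x1)) as [|Hlt]; auto. exfalso.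
  set (h := fun y => u y * du y).
  assert (Hh : forall y, 0 <= y <= P -> derivable_pt_lim h y (du y * du y + u y * (- ((q y + lam) * u y)))).
  { intros y Hy. destruct (S y Hy). unfold h. eapply dlim_eq. apply dmul; eauto. reflexivity. }
  assert (Hhp : forall y, 0 <= y <= P -> 0 <= du y * du y + u y * (- ((q y + lam) * u y))).
  { intros y Hy. specialize (Hneg y Hy). assert (0 <= u y * u y) by nra. nra. }
  assert (Hh0 : forall y, 0 <= y <= P -> 0 <= h y).
  { intros y Hy. pose proof (nondecr_deriv h _ 0 P Hh Hhp 0 y ltac:(lra) ltac:(lra) ltac:(lra)).
    unfold h in H at 1. rewrite A in H. lra. }
  set (s := fun y => u y * u y).
  assert (Hs : forall y, 0 <= y <= P -> derivable_pt_lim s y (2 * h y)).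
  { intros y Hy. destruct (S y Hy). unfold s, h. eapply dlim_eq. apply dmul; eauto. ring. }
  assert (Hsm : forall y z, 0 <= y -> y <= z -> z <= P -> s y <= s z).
  { apply (nondecr_deriv s (fun y => 2 * h y) 0 P Hs). intros y Hy. specialize (Hh0 y Hy). lra. }
  destruct (S 0 ltac:(lra)) as [D0 _]. rewrite B in D0.
  destruct (deriv_pos_right u 0 1 D0 ltac:(lra)) as [d [Hd Hd2]].
  set (t := Rmin d x1 / 2).
  assert (Ht : 0 < t < d /\ t < x1) by (unfold t; unfold Rmin; destruct (Rle_dec d x1); lra).
  specialize (Hd2 t ltac:(lra)). rewrite Rplus_0_l, A in Hd2.
  destruct (ivt2 u t x1 ltac:(lra)) as [z [Hz Ez]].
  { intros c Hc. apply (sol_cont_u _ _ _ _ _ S). lra. }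
  { nra. }
  pose proof (Hsm t z ltac:(lra) ltac:(lra) ltac:(lra)). unfold s in H. rewrite Ez in H. nra.
Qed.

Lemma ground q P dphi ddphi : P > 0 -> (forall x, continuity_pt q x) -> sol q 0 P dphi ddphi ->
  (forall x, 0 < x < P / 2 -> dphi x < 0) -> (forall x, P / 2 < x < P -> 0 < dphi x) -> dphi 0 = 0 ->
  exists lam0 u0 du0, lam0 < 0 /\ SL_eigenpair q P lam0 u0 du0.
Proof.
  intros HP Hq Hsd Hneg Hpos Hd0.
  assert (HQ : forall lam x, 0 <= x <= P -> continuity_pt (fun x => q x + lam) x).
  { intros lam y _. apply continuity_pt_plus; auto. apply continuity_pt_const; intros a b; reflexivity. }
  set (S := fun lam => lam <= 0 /\ exists u du, Sol q P lam u du /\ exists x, 0 < x < P /\ u x < 0).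
  assert (Hopen : forall lam, S lam -> exists d, 0 < d /\ forall l, lam - d < l <= lam -> S l).
  { intros lam [Hle [u [du [Hs [x [Hx Hux]]]]]].
    destruct (Sol_close q P lam u du HP Hq Hs (- u x) ltac:(lra)) as [d [Hd Hd2]].
    exists d. split; auto. intros l Hl. split; [lra|].
    destruct (Sol_exists q P l HP Hq) as [u2 [du2 H2]]. exists u2, du2. split; auto.
    exists x. split; auto.
    destruct (Hd2 l u2 du2 ltac:(apply Rabs_def1; lra) H2 x ltac:(lra)) as [C _].
    apply Rabs_lt_between in C. lra. }
  assert (S0 : S 0).
  { split; [lra|]. destruct (Sol_exists q P 0 HP Hq) as [u [du [Hs [A B]]]].
    exists u, du. split. split; auto.
    set (c := ddphi 0).
    assert (Hsd' : sol (fun x => q x + 0) 0 P dphi ddphi) by (apply (sol_ext q); auto; intros; ring).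
    assert (Z := sol_unique _ 0 P _ _ 0 (HQ 0) (sol_lin _ 0 P dphi ddphi u du c Hsd' Hs) ltac:(lra)).
    assert (Z0 : dphi 0 - c * u 0 = 0) by (rewrite Hd0, A; ring).
    assert (Z1 : ddphi 0 - c * du 0 = 0) by (rewrite B; unfold c; ring).
    specialize (Z Z0 Z1).
    assert (E1 : dphi (P / 4) = c * u (P / 4)) by (destruct (Z (P / 4) ltac:(lra)); lra).
    assert (E2 : dphi (3 * P / 4) = c * u (3 * P / 4)) by (destruct (Z (3 * P / 4) ltac:(lra)); lra).
    pose proof (Hneg (P / 4) ltac:(lra)). pose proof (Hpos (3 * P / 4) ltac:(lra)).
    destruct (Rlt_or_le 0 c) as [Hc|Hc].
    - exists (P / 4). split; [lra|]. nra.
    - exists (3 * P / 4). split; [lra|]. nra. }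
  destruct (bound_on q 0 P ltac:(lra) (fun x _ => Hq x)) as [Mq [HMq HMqb]].
  assert (Hlow : forall l, S l -> - (Mq + 1) < l).
  { intros l [Hl [u [du [Hs [x [Hx Hux]]]]]]. destruct (Rlt_or_le (- (Mq + 1)) l) as [|Hle]; auto.
    exfalso. assert (0 <= u x).
    { apply (Sol_low q P l u du HP Hs); auto. intros y Hy. specialize (HMqb y Hy).
      apply Rabs_le_between in HMqb. lra. }
    lra. }
  set (E := fun y => S (- y)).
  assert (Hb : bound E) by (exists (Mq + 1); intros y Hy; specialize (Hlow _ Hy); lra).
  assert (Hne : exists y, E y) by (exists 0; unfold E; rewrite Ropp_0; auto).
  destruct (completeness E Hb Hne) as [L [Hub Hlub]].
  set (lam0 := - L).
  assert (Hinf1 : forall l, S l -> lam0 <= l).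
  { intros l Hl. assert (- l <= L) by (apply Hub; unfold E; rewrite Ropp_involutive; auto). unfold lam0; lra. }
  assert (Hinf2 : forall b, (forall l, S l -> b <= l) -> b <= lam0).
  { intros b Hb2. assert (L <= - b).
    { apply Hlub. intros y Hy. specialize (Hb2 _ Hy). lra. }
    unfold lam0; lra. }
  assert (Hl0 : lam0 < 0).
  { destruct (Hopen 0 S0) as [d [Hd Hd2]]. specialize (Hinf1 (- d / 2) (Hd2 (- d / 2) ltac:(lra))). lra. }
  assert (HnS : ~ S lam0).
  { intro HS. destruct (Hopen lam0 HS) as [d [Hd Hd2]]. specialize (Hinf1 (lam0 - d / 2) (Hd2 (lam0 - d / 2) ltac:(lra))). lra. }
  destruct (Sol_exists q P lam0 HP Hq) as [u0 [du0 Hs0]].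
  pose proof Hs0 as [S0' [A0 B0]].
  assert (Hnn : forall x, 0 < x < P -> 0 <= u0 x).
  { intros x Hx. destruct (Rle_or_lt 0 (u0 x)) as [|Hlt]; auto. exfalso. apply HnS.
    split; [lra|]. exists u0, du0. split; auto. exists x. auto. }
  assert (Hcu0 := sol_cont_u _ _ _ _ _ S0').
  assert (HuP : u0 P = 0).
  { destruct (Rtotal_order (u0 P) 0) as [Hlt|[|Hgt]]; auto; exfalso.
    - destruct (cont_pos_near (fun y => - u0 y) P) as [al [Hal Hal2]].
      apply continuity_pt_opp. apply Hcu0. lra. lra.
      set (t := P - Rmin al P / 2).
      assert (Ht : 0 < t < P /\ Rabs (t - P) < al).
      { unfold t. assert (0 < Rmin al P) by (apply Rmin_pos; lra).
        assert (Rmin al P <= al) by apply Rmin_l. assert (Rmin al P <= P) by apply Rmin_r.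
        split; [lra|]. rewrite Rabs_left by lra. lra. }
      specialize (Hal2 t (proj2 Ht)). specialize (Hnn t (proj1 Ht)). lra.
    - assert (Hp : forall x, 0 < x <= P -> 0 < u0 x).
      { intros x Hx. destruct (Req_dec x P) as [->|HxP]; auto.
        destruct (Rle_lt_or_eq_dec 0 (u0 x) (Hnn x ltac:(lra))) as [|E0]; auto. exfalso.
        assert (Hdx : du0 x = 0).
        { apply (deriv_zero_min u0 x (du0 x) 0 P); [apply S0'; lra| lra|].
          intros y Hy. rewrite <- E0. apply Hnn; auto. }
        destruct (sol_unique _ 0 P u0 du0 x (HQ lam0) S0' ltac:(lra) (eq_sym E0) Hdx 0 ltac:(lra)).
        lra. }
      destruct (cont_pos_near (fun y => du0 y - 1 / 2) 0) as [al [Hal Hal2]].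
      { apply continuity_pt_minus. apply (sol_cont_du _ _ _ _ _ S0'). lra.
        apply continuity_pt_const; intros a b; reflexivity. }
      { rewrite B0. lra. }
      set (eta := Rmin al P / 2).
      assert (Heta : 0 < eta /\ eta <= al / 2 /\ eta <= P / 2).
      { unfold eta. assert (0 < Rmin al P) by (apply Rmin_pos; lra).
        assert (Rmin al P <= al) by apply Rmin_l. assert (Rmin al P <= P) by apply Rmin_r. lra. }
      destruct (continuity_ab_min u0 eta P ltac:(lra)) as [xm [Hxm1 Hxm2]].
      { intros c Hc. apply Hcu0. lra. }
      set (m0 := u0 xm). assert (Hm0 : 0 < m0) by (apply Hp; lra).
      set (e := Rmin (m0 / 2) (1 / 4)).
      assert (He : 0 < e /\ e <= m0 / 2 /\ e <= 1 / 4).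
      { unfold e. split. apply Rmin_pos; lra. split. apply Rmin_l. apply Rmin_r. }
      destruct (Sol_close q P lam0 u0 du0 HP Hq Hs0 e ltac:(lra)) as [d [Hd Hd2]].
      assert (Hlb : forall l, S l -> lam0 + d <= l).
      { intros l Hl. pose proof (Hinf1 l Hl) as Hll.
        destruct (Rlt_or_le l (lam0 + d)) as [Hlt|]; auto. exfalso.
        destruct Hl as [_ [u [du [Hs [x [Hx Hux]]]]]].
        assert (Hcl : forall y, 0 <= y <= P -> Rabs (u y - u0 y) < e /\ Rabs (du y - du0 y) < e).
        { apply (Hd2 l u du); auto. apply Rabs_def1; lra. }
        destruct (Rle_or_lt eta x) as [Hxe|Hxe].
        - destruct (Hcl x ltac:(lra)) as [C _]. apply Rabs_lt_between in C.
          specialize (Hxm1 x ltac:(lra)). fold m0 in Hxm1. lra.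
        - destruct Hs as [Ss [As Bs]].
          destruct (MVT_cor2 u du 0 x ltac:(lra)) as [xi [Exi Hxi]].
          { intros c Hc. apply Ss. lra. }
          destruct (Hcl xi ltac:(lra)) as [_ C]. apply Rabs_lt_between in C.
          assert (0 < du0 xi - 1 / 2).
          { apply Hal2. rewrite Rminus_0_r. rewrite Rabs_right by lra. lra. }
          rewrite As in Exi. assert (0 < du xi * (x - 0)) by (apply Rmult_lt_0_compat; lra). lra. }
      specialize (Hinf2 _ Hlb). lra. }
  exists lam0, u0, du0. split; auto.
  split; [|split; [auto| split; auto]].
  - exists (fun x => - ((q x + lam0) * u0 x)). intros x Hx. destruct (S0' x Hx). split; auto. split; auto. ring.
  - destruct (S0' 0 ltac:(lra)) as [D _]. rewrite B0 in D.
    destruct (deriv_pos_right u0 0 1 D ltac:(lra)) as [d [Hd Hd2]].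
    set (t := Rmin d P / 2).
    assert (Ht : 0 < t < d /\ t <= P).
    { unfold t. assert (0 < Rmin d P) by (apply Rmin_pos; lra).
      assert (Rmin d P <= d) by apply Rmin_l. assert (Rmin d P <= P) by apply Rmin_r. lra. }
    exists t. split; [lra|]. specialize (Hd2 t (proj1 Ht)). rewrite Rplus_0_l, A0 in Hd2. lra.
Qed.

Theorem mainTheorem5
  (mu mu' phi dphi ddphi q : R -> R) (P gamma C : R)
  (* (i) mu is C^1 and nonnegative *)
  (Hmu_der : forall y, derivable_pt_lim mu y (mu' y))
  (Hmu'_cont : forall y, continuity_pt mu' y)
  (Hmu_nonneg : forall y, 0 <= mu y)
  (* (ii) normalization *)
  (Hmu_norm : improper_integral (fun v => mu (v ^ 2 / 2)) 1)
  (* (iii) decay of mu' *)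
  (Hgamma : gamma > 1) (HC : C > 0)
  (Hdecay : forall y, Rabs (mu' y) <= C / (1 + abs_rpow y gamma))
  (* phi is C^2 and solves phi'' = 1 - int mu(v^2/2 + phi) dv *)
  (Hphi_der : forall x, derivable_pt_lim phi x (dphi x))
  (Hdphi_der : forall x, derivable_pt_lim dphi x (ddphi x))
  (Hode : forall x, improper_integral (fun v => mu (v ^ 2 / 2 + phi x)) (1 - ddphi x))
  (* (iv) phi nonconstant with minimal period P, normalized *)
  (HP : P > 0)
  (Hper : forall x, phi (x + P) = phi x)
  (Hminper : forall T, 0 < T < P -> exists x, phi (x + T) <> phi x)
  (Hmax : forall x, phi x <= phi 0)
  (Hmin : forall x, phi (P / 2) <= phi x)
  (Hsym : forall x, 0 <= x <= P -> phi x = phi (P - x))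
  (Hdecr : forall x y, 0 <= x -> x < y -> y <= P / 2 -> phi y < phi x)
  (* q(x) = int mu'(v^2/2 + phi x) dv *)
  (Hq : forall x, improper_integral (fun v => mu' (v ^ 2 / 2 + phi x)) (q x)) :
  (* u = phi' is an eigenfunction with eigenvalue 0 *)
  SL_eigenpair q P 0 dphi ddphi /\
  (* ... and it is the second one: exactly one eigenvalue lies below 0 *)
  (exists lam1, lam1 < 0 /\ SL_eigenvalue q P lam1 /\
     forall lam, SL_eigenvalue q P lam -> lam < 0 -> lam = lam1) /\
  (* the smallest eigenvalue lam0 is negative and its eigenfunctions are symmetric *)
  (exists lam0, lam0 < 0 /\ SL_eigenvalue q P lam0 /\
     (forall lam, SL_eigenvalue q P lam -> lam0 <= lam) /\
     forall u0 du0, SL_eigenpair q P lam0 u0 du0 ->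
       forall x, 0 <= x <= P ->
         u0 x = u0 (P - x) /\ du0 (P - x) = - du0 x /\
         u0 (P - x) * du0 (P - x) = - (u0 x * du0 x)).
Proof.
  set (m := phi (P / 2)). set (Mx := phi 0).
  assert (Hr : forall x, m <= phi x <= Mx) by (intros x; split; [apply Hmin | apply Hmax]).
  assert (Hm : m <= Mx) by (apply (Hr 0)).
  pose proof (decay_inv mu' C gamma Hgamma HC Hdecay) as Hdec.
  assert (Hphic : forall x, continuity_pt phi x) by (intros x; apply (dlim_cont phi x (dphi x)); auto).
  pose proof (q_cont mu' phi q C m Mx HC Hmu'_cont Hdec Hm Hr Hphic Hq) as Hqc.
  pose proof (dd_est mu mu' phi ddphi q C m Mx HC Hmu'_cont Hdec Hm Hr Hmu_der Hode Hq) as Hest.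
  pose proof (ddphi_der phi dphi ddphi q Hphi_der Hest) as Hdd.
  assert (Hsd : sol q 0 P dphi ddphi) by (intros x _; split; auto).
  assert (HphiP : phi P = phi 0) by (rewrite <- (Hper 0); f_equal; ring).
  assert (Hd0 : dphi 0 = 0).
  { apply (deriv_zero_max phi 0 (dphi 0) (-1) 1 (Hphi_der 0)); [lra| intros; apply Hmax]. }
  assert (HdP : dphi P = 0).
  { apply (deriv_zero_max phi P (dphi P) (P - 1) (P + 1) (Hphi_der P)); [lra| intros; rewrite HphiP; apply Hmax]. }
  assert (Hinc : forall x y, P / 2 <= x -> x < y -> y <= P -> phi x < phi y).
  { intros x y H1 H2 H3. rewrite (Hsym x) by lra. rewrite (Hsym y) by lra. apply Hdecr; lra. }
  assert (Hnp : forall x, 0 < x < P / 2 -> dphi x <= 0).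
  { intros x Hx. apply (deriv_nonpos_right phi x); auto. exists (P / 2 - x). split; [lra|].
    intros h Hh. left. apply Hdecr; lra. }
  assert (Hpp : forall x, P / 2 < x < P -> 0 <= dphi x).
  { intros x Hx. apply (deriv_nonneg_right phi x); auto. exists (P - x). split; [lra|].
    intros h Hh. left. apply Hinc; lra. }
  assert (HQc : forall x, 0 <= x <= P -> continuity_pt q x) by auto.
  assert (Hall : forall x0, 0 <= x0 <= P -> dphi x0 = 0 -> ddphi x0 = 0 -> forall x, 0 <= x <= P -> dphi x = 0).
  { intros x0 Hx0 E1 E2 x Hx. apply (sol_unique q 0 P dphi ddphi x0 HQc Hsd Hx0 E1 E2 x Hx). }
  destruct (MVT_cor2 phi dphi 0 (P / 2) ltac:(lra) (fun c _ => Hphi_der c)) as [xi1 [E1 Hxi1]].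
  assert (Hxi1' : dphi xi1 < 0).
  { assert (phi (P / 2) < phi 0) by (apply Hdecr; lra). nra. }
  destruct (MVT_cor2 phi dphi (P / 2) P ltac:(lra) (fun c _ => Hphi_der c)) as [xi2 [E2 Hxi2]].
  assert (Hxi2' : 0 < dphi xi2).
  { assert (phi (P / 2) < phi P) by (apply Hinc; lra). nra. }
  assert (Hneg : forall x, 0 < x < P / 2 -> dphi x < 0).
  { intros x Hx. destruct (Rle_lt_or_eq_dec _ _ (Hnp x Hx)) as [|E]; auto. exfalso.
    assert (ddphi x = 0).
    { apply (deriv_zero_max dphi x (ddphi x) 0 (P / 2)); auto. intros y Hy. rewrite E. apply Hnp; auto. }
    pose proof (Hall x ltac:(lra) E H xi1 ltac:(lra)). lra. }
  assert (Hpos : forall x, P / 2 < x < P -> 0 < dphi x).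
  { intros x Hx. destruct (Rle_lt_or_eq_dec _ _ (Hpp x Hx)) as [|E]; auto. exfalso.
    assert (ddphi x = 0).
    { apply (deriv_zero_min dphi x (ddphi x) (P / 2) P); auto. intros y Hy. rewrite <- E. apply Hpp; auto. }
    pose proof (Hall x ltac:(lra) (eq_sym E) H xi2 ltac:(lra)). lra. }
  assert (Hdz : forall x, 0 < x < P -> dphi x = 0 -> x = P / 2).
  { intros x Hx E. destruct (Rtotal_order x (P / 2)) as [H|[H|H]]; auto.
    - specialize (Hneg x ltac:(lra)). lra.
    - specialize (Hpos x ltac:(lra)). lra. }
  assert (Hqsym : forall x, 0 <= x <= P -> q (P - x) = q x).
  { intros x Hx. pose proof (Hq (P - x)) as H. rewrite <- (Hsym x Hx) in H.
    apply (impr_unique _ _ _ H (Hq x)). }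
  split.
  { split; [|split; [auto| split; auto]].
    - exists (fun x => - (q x * dphi x)). intros x Hx. split; auto. split; auto. ring.
    - exists xi1. split; lra. }
  destruct (ground q P dphi ddphi HP Hqc Hsd Hneg Hpos Hd0) as [lam0 [u0 [du0 [Hl0 He0]]]].
  assert (N0 := noint q P dphi ddphi lam0 u0 du0 HP Hqc Hsd Hdz Hl0 He0).
  assert (Huniq : forall lam, SL_eigenvalue q P lam -> lam < 0 -> lam = lam0).
  { intros lam [u [du He]] Hlam. apply (neg_unique q P lam lam0 u du u0 du0); auto.
    apply (noint q P dphi ddphi lam u du); auto. }
  split.
  - exists lam0. split; auto. split; [exists u0, du0; auto| auto].
  - exists lam0. split; auto. split; [exists u0, du0; auto|]. split.
    + intros lam Hlam. destruct (Rlt_or_le lam 0) as [H|H]. rewrite (Huniq lam Hlam H). lra. lra.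
    + intros u1 du1 He1 x Hx. apply (eig_sym q P lam0 u1 du1); auto.
      apply (noint q P dphi ddphi lam0 u1 du1); auto. lra.
Qed.
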